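(* Let $\lambda$ be a (straight or skew) shape with $n$ boxes and let $m\in\mathbb N=\{1,2,3,\dots\}$. Then there is a bijection $$T[\lambda,0,+]=T[\lambda,\boxtimes]\cup T[\lambda,\div,+]\cup T[\lambda,\cdot|\cdot,+]\;\longrightarrow\;T[\lambda,m,+]$$ and a bijection $$T[\lambda,0,-]=T[\lambda,\boxtimes]\cup T[\lambda,\div,-]\cup T[\lambda,\cdot|\cdot,-]\;\longrightarrow\;T[\lambda,m,-],$$ each sending a tableau $X$ to the unique tableau $Y$ whose positive-content part, as a filling of $\lambda$, equals the nonnegative half of $X$ as a filling of $\lambda$.
   Context: Boxes of a diagram are indexed by (row $i$, column $j$), rows numbered downward and columns rightward; the content of box $(i,j)$ is $j-i$. A D-Young tableau is a filling of a skew diagram by the $2n$ numbers $\pm1,\dots,\pm n$, each number in exactly one box and each box containing one number, except that a box of content $0$ may contain a pair $\pm i$; with $c_k$ the content of the box containing $k$, one requires $c_{-k}=-c_k$. It is standard if entries increase along rows (left to right) and down columns (a box containing $\pm i$, $i>0$, counts as $-i$ when compared with entries to its left or above and as $i$ when compared with entries to its right or below). A D-Young tableau with no box of content $0$ is regarded as determined by its positive-content part (entries and contents). Let $\lambda$ be a shape with $n$ boxes. For $m\in\mathbb N$, $T[\lambda,m,\pm]$ is the set of standard D-Young tableaux whose smallest nonnegative content is $m$, whose positive-content boxes form the shape $\lambda$, with an even ($+$) / odd ($-$) number of negative entries among the positive-content boxes. $T[\lambda,\boxtimes]$ is the set of standard D-Young tableaux having exactly one box of content $0$ (necessarily containing a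 pair $\pm i$) whose boxes of nonnegative content form the shape $\lambda$; its nonnegative half is the filling of $\lambda$ by these boxes, where the zero-content box is regarded as containing $i$ or $-i$, the sign chosen so that the number of negative entries is even (for the $+$ bijection) or odd (for the $-$ bijection). $T[\lambda,\cdot|\cdot,+]$ (resp. $T[\lambda,\div,+]$) is the set of standard D-Young tableaux with exactly two boxes of content $0$ which can be divided by a vertical (resp. horizontal) straight line into two parts of $n$ boxes each, one consisting of boxes of nonnegative content and the other of boxes of nonpositive content, such that the part of nonnegative content (its nonnegative half) has shape $\lambda$ and contains an even number of negative entries; with ''odd'' instead of ''even'' one gets $T[\lambda,\cdot|\cdot,-]$, $T[\lambda,\div,-]$. The sets $T[\lambda,0,\pm]$ are defined as the displayed unions. *)

(* Defs.v *)
(* boxes are pairs of integers (row, column). *)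
From Stdlib Require Import ZArith List Bool Lia.
Open Scope Z_scope.

Definition box := (Z * Z)%type.

Definition content (b : box) : Z := snd b - fst b.

Definition shift (b t : box) : box := (fst b + fst t, snd b + snd t).

Definition beq_box (a b : box) : bool :=
  Z.eqb (fst a) (fst b) && Z.eqb (snd a) (snd b).

Definition ents (n : nat) : list Z :=
  map Z.of_nat (seq 1 n) ++ map (fun i => - Z.of_nat i) (seq 1 n).

Definition entry (n : nat) (k : Z) : Prop := In k (ents n).

(* a filling of a diagram by +-1..+-n is given by the box [p k] containing k *)
Definition Tab := Z -> box.

Definition inD (n : nat) (p : Tab) (b : box) : Prop :=
  exists k, entry n k /\ p k = b.

(* skew diagram: a finite set of boxes which is convex for the product order
   (equivalently, a translate of a skew shape mu/nu) *)
Definition skew (D : box -> Prop) : Prop :=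
  forall a b c, D a -> D c ->
    fst a <= fst b <= fst c -> snd a <= snd b <= snd c -> D b.

Definition DYoung (n : nat) (p : Tab) : Prop :=
  (forall k l, entry n k -> entry n l -> k <> l -> p k = p l ->
     l = - k /\ content (p k) = 0) /\
  (forall k, entry n k -> content (p (- k)) = - content (p k)) /\
  skew (inD n p).

Definition paired (p : Tab) (k : Z) : bool := beq_box (p k) (p (- k)).

(* value of the box of k when compared with entries to its right or below *)
Definition lval (p : Tab) (k : Z) : Z := if paired p k then Z.abs k else k.
(* value of the box of k when compared with entries to its left or above *)
Definition rval (p : Tab) (k : Z) : Z := if paired p k then - Z.abs k else k.

Definition standard (n : nat) (p : Tab) : Prop :=
  forall k l, entry n k -> entry n l ->
    ((fst (p k) = fst (p l) /\ snd (p k) < snd (p l)) \/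
     (snd (p k) = snd (p l) /\ fst (p k) < fst (p l))) ->
    lval p k < rval p l.

Definition DStd (n : nat) (p : Tab) : Prop := DYoung n p /\ standard n p.

(* number of (distinct) boxes whose position satisfies P *)
Definition nboxes (n : nat) (p : Tab) (P : box -> bool) : nat :=
  length (filter (fun k => P (p k) && (negb (paired p k) || Z.ltb 0 k)) (ents n)).

Definition nneg (n : nat) (p : Tab) (P : box -> bool) : nat :=
  length (filter (fun k => Z.ltb k 0 && P (p k)) (ents n)).

Definition zerob (b : box) : bool := Z.eqb (content b) 0.
Definition posb (b : box) : bool := Z.ltb 0 (content b).

Definition minnonneg (n : nat) (p : Tab) (m : Z) : Prop :=
  (exists k, entry n k /\ content (p k) = m) /\
  (forall k, entry n k -> 0 <= content (p k) -> m <= content (p k)).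

(* [E b e] : box b of some part carries entry e.  [filling_of lam E F]: the
   boxes of the part form (a translate of) the shape lam, and, read as a
   filling of lam, the part is F. *)
Definition filling_of (lam : list box) (E : box -> Z -> Prop) (F : box -> Z)
  : Prop :=
  exists t : box,
    (forall b, (exists e, E b e) <-> exists b0, In b0 lam /\ b = shift b0 t) /\
    (forall b0, In b0 lam -> forall e, E (shift b0 t) e <-> e = F b0).

(* ---- T[lam, m, s] (m >= 1), s = true for '+', false for '-' ----
   [Rm lam m s q F]: q is in T[lam,m,s] and its positive-content part,
   as a filling of lam, is F. *)
Definition Rm (lam : list box) (m : Z) (s : bool) (q : Tab) (F : box -> Z)
  : Prop :=
  let n := length lam in
  DStd n q /\ minnonneg n q m /\
  filling_of lam (fun b e => entry n e /\ q e = b /\ 0 < content b) F /\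
  Nat.even (nneg n q posb) = s.

Definition Rbox (lam : list box) (s : bool) (p : Tab) (F : box -> Z) : Prop :=
  let n := length lam in
  DStd n p /\ nboxes n p zerob = 1%nat /\
  filling_of lam
    (fun b e => entry n e /\ p e = b /\ 0 <= content b /\
       (content b = 0 -> (0 < e <-> Nat.even (nneg n p posb) = s))) F.

(* ---- T[lam, div, s] (horiz = true) and T[lam, .|., s] (horiz = false):
   a horizontal (resp. vertical) line splits the boxes into the rows <= c0 /
   rows > c0 (resp. columns <= c0 / columns > c0); [side] selects which of
   the two parts is the nonnegative-content one. ---- *)
Definition Rsplit (horiz : bool) (lam : list box) (s : bool) (p : Tab)
  (F : box -> Z) : Prop :=
  let n := length lam in
  DStd n p /\ nboxes n p zerob = 2%nat /\
  exists (c0 : Z) (side : bool),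
    let P := fun b : box =>
      Bool.eqb (if horiz then Z.leb (fst b) c0 else Z.leb (snd b) c0) side in
    nboxes n p P = n /\ nboxes n p (fun b => negb (P b)) = n /\
    (forall k, entry n k -> P (p k) = true -> 0 <= content (p k)) /\
    (forall k, entry n k -> P (p k) = false -> content (p k) <= 0) /\
    filling_of lam (fun b e => entry n e /\ p e = b /\ P b = true) F /\
    Nat.even (nneg n p P) = s.

Definition R0 (lam : list box) (s : bool) (p : Tab) (F : box -> Z) : Prop :=
  Rbox lam s p F \/ Rsplit true lam s p F \/ Rsplit false lam s p F.

(* D-Young tableaux are identified when they have the same entries with the
   same contents *)
Definition same_tableau (n : nat) (p p' : Tab) : Prop :=
  forall k, entry n k -> content (p k) = content (p' k).

(* Main.v *)
Require Import Defs.
From Stdlib Require Import ZArith List Lia Permutation Bool Classical.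
Require Import Defs.
Open Scope Z_scope.

Lemma entry_iff n k : entry n k <-> k <> 0 /\ Z.abs k <= Z.of_nat n.
Proof.
  unfold entry, ents. rewrite in_app_iff, !in_map_iff. split.
  - intros [[i [<- Hi]]|[i [<- Hi]]]; apply in_seq in Hi; lia.
  - intros [H1 H2]. destruct (Z_lt_le_dec 0 k).
    + left. exists (Z.to_nat k). rewrite in_seq. split; lia.
    + right. exists (Z.to_nat (-k)). rewrite in_seq. split; lia.
Qed.

Lemma entry_opp n k : entry n k -> entry n (-k).
Proof. rewrite !entry_iff. lia. Qed.

Lemma ents_NoDup n : NoDup (ents n).
Proof.
  unfold ents. apply NoDup_app.
  - apply FinFun.Injective_map_NoDup; [intros a b; lia| apply seq_NoDup].
  - apply FinFun.Injective_map_NoDup; [intros a b; lia| apply seq_NoDup].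
  - intros a Ha Hb. rewrite in_map_iff in Ha, Hb.
    destruct Ha as [i [<- Hi]]; destruct Hb as [j [Hj Hj']].
    apply in_seq in Hi; apply in_seq in Hj'. lia.
Qed.

Lemma ents_length n : length (ents n) = (2 * n)%nat.
Proof. unfold ents. rewrite length_app, !length_map, length_seq. lia. Qed.

Lemma C_rm (l : list Z) a f : NoDup l -> In a l -> f a = true ->
  length (filter f l) = S (length (filter (fun x => f x && negb (x =? a)) l)).
Proof.
  induction l as [|y l IH]; simpl; intros Hn Ha Hf; [contradiction|].
  inversion Hn; subst. destruct Ha as [->|Ha].
  - rewrite Hf, Z.eqb_refl. simpl. f_equal.
    apply f_equal, filter_ext_in. intros x Hx.
    destruct (Z.eqb_spec x a); subst; [contradiction|]. rewrite andb_true_r; auto.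
  - destruct (Z.eqb_spec y a); [subst; contradiction|].
    destruct (f y); simpl; rewrite IH; auto.
Qed.

Lemma C_split {A} (l : list A) f g :
  length (filter f l) = (length (filter (fun x => f x && g x) l) + length (filter (fun x => f x && negb (g x)) l))%nat.
Proof. induction l; simpl; auto. destruct (f a), (g a); simpl; lia. Qed.

Lemma C_mono {A} (l : list A) (f g : A -> bool) :
  (forall x, In x l -> f x = true -> g x = true) -> (length (filter f l) <= length (filter g l))%nat.
Proof.
  induction l; simpl; intros H; auto.
  destruct (f a) eqn:E.
  - rewrite (H a (or_introl eq_refl) E). simpl. apply le_n_S, IHl. intros; auto.
  - destruct (g a); simpl; [apply le_S|]; apply IHl; intros; auto.
Qed.

Lemma C_all {A} (l : list A) f : length (filter f l) = length l -> forall x, In x l -> f x = true.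
Proof.
  induction l; simpl; intros H x Hx; [contradiction|].
  destruct (f a) eqn:E.
  - destruct Hx as [->|Hx]; auto.
  - pose proof (filter_length_le f l). simpl in H. lia.
Qed.

Lemma C_map {A B} (l : list A) (g : A -> B) f :
  length (filter f (map g l)) = length (filter (fun x => f (g x)) l).
Proof. induction l; simpl; auto. destruct (f (g a)); simpl; auto. Qed.

Lemma C_neg n f : length (filter f (ents n)) = length (filter (fun k => f (- k)) (ents n)).
Proof.
  unfold ents. rewrite !filter_app, !length_app, !C_map.
  rewrite Nat.add_comm. f_equal; apply f_equal, filter_ext; intros; f_equal; lia.
Qed.

Lemma C_2 (l : list Z) f a b : NoDup l -> In a l -> In b l -> a <> b -> f a = true -> f b = true ->
  (2 <= length (filter f l))%nat.
Proof.
  intros Hn Ha Hb Hab Hfa Hfb. rewrite (C_rm l a f); auto.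
  rewrite (C_rm l b); auto. lia.
  rewrite Hfb. simpl. destruct (Z.eqb_spec b a); simpl; congruence.
Qed.

Lemma C_3 (l : list Z) f a b c : NoDup l -> In a l -> In b l -> In c l -> a <> b -> a <> c -> b <> c ->
  f a = true -> f b = true -> f c = true -> (3 <= length (filter f l))%nat.
Proof.
  intros Hn Ha Hb Hc Hab Hac Hbc Hfa Hfb Hfc. rewrite (C_rm l a f); auto.
  rewrite (C_rm l b); auto. rewrite (C_rm l c); auto. lia.
  rewrite Hfc. simpl. destruct (Z.eqb_spec c a); simpl; try congruence. destruct (Z.eqb_spec c b); simpl; congruence.
  rewrite Hfb. simpl. destruct (Z.eqb_spec b a); simpl; congruence.
Qed.

Lemma C_plus1 (l : list Z) f g a : NoDup l -> In a l -> f a = false -> g a = true ->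
  (forall x, In x l -> x <> a -> f x = g x) -> length (filter g l) = S (length (filter f l)).
Proof.
  intros Hn Ha Hf Hg H. rewrite (C_rm l a g); auto. f_equal. f_equal.
  apply filter_ext_in. intros x Hx. destruct (Z.eqb_spec x a); subst.
  - rewrite Hf. simpl. apply andb_false_r.
  - rewrite andb_true_r. symmetry; auto.
Qed.

Lemma C_one (l : list Z) f a : NoDup l -> In a l -> (forall x, In x l -> f x = true <-> x = a) ->
  length (filter f l) = 1%nat.
Proof.
  intros Hn Ha H. rewrite (C_rm l a f); auto.
  2: apply H; auto.
  f_equal. rewrite (filter_ext_in _ (fun _ => false)). 
  - clear. induction l; simpl; auto.
  - intros x Hx. destruct (f x) eqn:E; simpl; auto. apply H in E; auto. subst. rewrite Z.eqb_refl. auto.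
Qed.

Lemma C_two (l : list Z) f a b : NoDup l -> In a l -> In b l -> a <> b ->
  (forall x, In x l -> f x = true <-> x = a \/ x = b) ->
  length (filter f l) = 2%nat.
Proof.
  intros Hn Ha Hb Hab H. rewrite (C_rm l a f); auto.
  2: apply H; auto.
  f_equal. apply (C_one _ _ b); auto. intros x Hx. rewrite andb_true_iff, (H x Hx), negb_true_iff, Z.eqb_neq.
  intuition; subst; auto.
Qed.

Lemma even_S c : Nat.even (S c) = negb (Nat.even c).
Proof. rewrite Nat.even_succ, <- Nat.negb_even. auto. Qed.

Lemma argmax (g : box -> Z) (l : list box) : l <> nil -> exists b, In b l /\ forall b', In b' l -> g b' <= g b.
Proof.
  induction l as [|a l IH]; intros H; [congruence|].
  destruct l as [|c l'].
  - exists a. simpl. split; auto. intros b' [->|[]]; lia.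
  - destruct IH as [b [Hb Hm]]; [discriminate|].
    destruct (Z_le_dec (g a) (g b)).
    + exists b. split; [right; auto|]. intros b' [<-|Hb']; auto.
    + exists a. split; [left; auto|]. intros b' [<-|Hb']; [lia|]. specialize (Hm b' Hb'); lia.
Qed.

Lemma transl_zero (lam : list box) (d : box) :
  (forall b0, In b0 lam -> In (shift b0 d) lam) -> lam <> nil -> d = (0,0).
Proof.
  intros H Hne. destruct d as [d1 d2].
  assert (d1 = 0).
  { destruct (Z_lt_le_dec 0 d1).
    - destruct (argmax fst lam Hne) as [b [Hb Hm]]. specialize (Hm _ (H _ Hb)). simpl in Hm. lia.
    - destruct (Z_lt_le_dec d1 0); [|lia].
      destruct (argmax (fun b => - fst b) lam Hne) as [b [Hb Hm]]. specialize (Hm _ (H _ Hb)). simpl in Hm. lia. }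
  assert (d2 = 0).
  { destruct (Z_lt_le_dec 0 d2).
    - destruct (argmax snd lam Hne) as [b [Hb Hm]]. specialize (Hm _ (H _ Hb)). simpl in Hm. lia.
    - destruct (Z_lt_le_dec d2 0); [|lia].
      destruct (argmax (fun b => - snd b) lam Hne) as [b [Hb Hm]]. specialize (Hm _ (H _ Hb)). simpl in Hm. lia. }
  subst; auto.
Qed.

Lemma shift_inj b0 b1 t : shift b0 t = shift b1 t -> b0 = b1.
Proof. destruct b0, b1, t; unfold shift; simpl; intros H; inversion H; f_equal; lia. Qed.

Lemma beq_box_iff a b : beq_box a b = true <-> a = b.
Proof.
  destruct a, b; unfold beq_box; simpl. rewrite andb_true_iff, !Z.eqb_eq. split.
  intros [-> ->]; auto. intros H; inversion H; auto.
Qed.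

Lemma paired_iff p k : paired p k = true <-> p k = p (-k).
Proof. unfold paired. apply beq_box_iff. Qed.

Lemma lval_ge p k : k <= lval p k.
Proof. unfold lval. destruct paired; lia. Qed.
Lemma rval_le p k : rval p k <= k.
Proof. unfold rval. destruct paired; lia. Qed.

Definition inF (lam : list box) (F : box -> Z) (k : Z) : bool :=
  existsb (fun b0 => Z.eqb (F b0) k) lam.

Lemma inF_iff lam F k : inF lam F k = true <-> exists b0, In b0 lam /\ F b0 = k.
Proof.
  unfold inF. rewrite existsb_exists. split; intros [b [H1 H2]]; exists b; split; auto.
  apply Z.eqb_eq; auto. apply Z.eqb_eq; auto.
Qed.

Definition rel (b0 b1 : box) : Prop :=
  (fst b0 = fst b1 /\ snd b0 < snd b1) \/ (snd b0 = snd b1 /\ fst b0 < fst b1).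

Definition Fstd (lam : list box) (F : box -> Z) : Prop :=
  forall b0 b1, In b0 lam -> In b1 lam -> rel b0 b1 -> F b0 < F b1.

Definition HF (lam : list box) (s : bool) (F : box -> Z) : Prop :=
  (forall b0, In b0 lam -> entry (length lam) (F b0)) /\
  (forall b0 b1, In b0 lam -> In b1 lam -> F b0 = F b1 -> b0 = b1) /\
  (forall b0 b1, In b0 lam -> In b1 lam -> F b0 = - F b1 -> False) /\
  Fstd lam F /\
  Nat.even (length (filter (fun k => (k <? 0) && inF lam F k) (ents (length lam)))) = s.

Lemma NoDup_map_on {A B} (f : A -> B) (l : list A) :
  (forall x y, In x l -> In y l -> f x = f y -> x = y) -> NoDup l -> NoDup (map f l).
Proof.
  induction l; simpl; intros H Hn; constructor; inversion Hn; subst.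
  - rewrite in_map_iff. intros [x [Hx Hx']]. assert (x = a) by (apply H; auto). subst; contradiction.
  - apply IHl; auto.
Qed.

Lemma coverage lam s F : NoDup lam -> HF lam s F ->
  forall k, entry (length lam) k -> exists b0, In b0 lam /\ (F b0 = k \/ F b0 = -k).
Proof.
  intros Hn [He [Hi [Hc _]]] k Hk.
  set (l1 := map (fun b => Z.abs (F b)) lam).
  set (l2 := map Z.of_nat (seq 1 (length lam))).
  assert (N1 : NoDup l1).
  { apply NoDup_map_on; auto. intros x y Hx Hy E.
    destruct (Z.abs_eq_or_opp (F x)), (Z.abs_eq_or_opp (F y));
    first [apply Hi; auto; lia | exfalso; apply (Hc x y); auto; lia]. }
  assert (I : incl l2 l1).
  { apply NoDup_length_incl; auto.
    - unfold l1, l2. rewrite !length_map, length_seq. lia.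
    - intros x Hx. unfold l1 in Hx. rewrite in_map_iff in Hx. destruct Hx as [b [<- Hb]].
      specialize (He b Hb). rewrite entry_iff in He. unfold l2. rewrite in_map_iff.
      exists (Z.to_nat (Z.abs (F b))). rewrite in_seq. split; lia. }
  assert (In (Z.abs k) l2).
  { rewrite entry_iff in Hk. unfold l2. rewrite in_map_iff. exists (Z.to_nat (Z.abs k)).
    rewrite in_seq. split; lia. }
  apply I in H. unfold l1 in H. rewrite in_map_iff in H. destruct H as [b [Hb Hb']].
  exists b. split; auto. lia.
Qed.

Lemma fill_gen lam n (p : Tab) (Q : box -> Z -> Prop) F :
  filling_of lam (fun b e => entry n e /\ p e = b /\ Q b e) F ->
  exists t, (forall b0, In b0 lam -> entry n (F b0) /\ p (F b0) = shift b0 t /\ Q (shift b0 t) (F b0)) /\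
   (forall k, entry n k -> Q (p k) k -> exists b0, In b0 lam /\ F b0 = k) /\
   (forall b, (exists e, entry n e /\ p e = b /\ Q b e) <-> exists b0, In b0 lam /\ b = shift b0 t).
Proof.
  intros [t [H1 H2]]. exists t. split; [|split].
  - intros b0 Hb0. apply (H2 b0 Hb0 (F b0)). auto.
  - intros k Hk HQ. destruct (proj1 (H1 (p k)) (ex_intro _ k (conj Hk (conj eq_refl HQ)))) as [b0 [Hb0 E]].
    exists b0. split; auto. symmetry. apply (H2 b0 Hb0 k). rewrite <- E. auto.
  - auto.
Qed.

Lemma Fstd_of lam n (p : Tab) F t : standard n p ->
  (forall b0, In b0 lam -> entry n (F b0) /\ p (F b0) = shift b0 t) -> Fstd lam F.
Proof.
  intros Hs H b0 b1 Hb0 Hb1 Hr.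
  destruct (H b0 Hb0) as [E0 P0]. destruct (H b1 Hb1) as [E1 P1].
  pose proof (Hs (F b0) (F b1) E0 E1) as X. rewrite P0, P1 in X.
  destruct b0, b1, t; unfold rel, shift in *; simpl in *.
  pose proof (lval_ge p (F (z, z0))). pose proof (rval_le p (F (z1, z2))).
  assert (lval p (F (z, z0)) < rval p (F (z1, z2))) by (apply X; lia). lia.
Qed.

Definition Hp (lam : list box) (s : bool) (p : Tab) (F : box -> Z) (t : box) : Prop :=
  HF lam s F /\ (forall b0, In b0 lam -> p (F b0) = shift b0 t) /\
  (forall b0, In b0 lam -> 0 <= content (shift b0 t)) /\
  (exists b0, In b0 lam /\ content (shift b0 t) = 0) /\
  (forall k l, entry (length lam) k -> entry (length lam) l -> content (p k) = 0 -> content (p l) = 0 -> l = k \/ l = -k).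

Lemma filter_nonempty {A} (f : A -> bool) l : (0 < length (filter f l))%nat -> exists x, In x l /\ f x = true.
Proof.
  intros H. destruct (filter f l) eqn:E; simpl in H; [lia|].
  assert (In a (filter f l)) by (rewrite E; left; auto). apply filter_In in H0. eauto.
Qed.

Lemma in_ents_opp n k : In k (ents n) -> In (-k) (ents n).
Proof. apply entry_opp. Qed.

Lemma Rbox_Hp lam s p F : NoDup lam -> Rbox lam s p F -> DYoung (length lam) p /\ exists t, Hp lam s p F t.
Proof.
  unfold Rbox; cbv zeta. intros Hn [[[Hy1 [Hy2 Hsk]] Hst] [Hnb Hfill]].
  split; [exact (conj Hy1 (conj Hy2 Hsk))|].
  set (n := length lam) in *.
  set (c := nneg n p posb) in *.
  apply fill_gen in Hfill. destruct Hfill as [t [F1 [F2 F3]]].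
  unfold nboxes in Hnb.
  set (X := fun k => zerob (p k) && (negb (paired p k) || (0 <? k))) in *.
  assert (Z1 : forall y, entry n y -> content (p y) = 0 -> p y = p (-y)).
  { intros y Hk H0. apply NNPP; intro Hne.
    assert (2 <= length (filter X (ents n)))%nat; [|lia].
    apply (C_2 _ _ y (-y)); auto using ents_NoDup, in_ents_opp.
    - rewrite entry_iff in Hk; lia.
    - unfold X, zerob. rewrite H0. simpl. destruct (paired p y) eqn:E; auto.
      apply paired_iff in E. contradiction.
    - unfold X, zerob. rewrite Hy2, H0 by auto. simpl. destruct (paired p (-y)) eqn:E; auto.
      apply paired_iff in E. rewrite Z.opp_involutive in E. exfalso; auto. }
  assert (Zabs : forall y, entry n y -> content (p y) = 0 ->
            entry n (Z.abs y) /\ content (p (Z.abs y)) = 0 /\ X (Z.abs y) = true).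
  { intros y Hk H0. assert (entry n (Z.abs y) /\ content (p (Z.abs y)) = 0) as [A1 A2].
    { destruct (Z.abs_eq_or_opp y) as [E|E]; rewrite E; split; auto using entry_opp.
      rewrite Hy2; auto; lia. }
    split; [|split]; auto. unfold X, zerob. rewrite A2. simpl.
    rewrite entry_iff in Hk. destruct (0 <? Z.abs y) eqn:E; [apply orb_true_r|]. rewrite Z.ltb_nlt in E. lia. }
  assert (Z2 : forall y w, entry n y -> entry n w -> content (p y) = 0 -> content (p w) = 0 -> w = y \/ w = -y).
  { intros y w Hk Hl H0 H1. destruct (Zabs y Hk H0) as [A1 [A2 A3]]. destruct (Zabs w Hl H1) as [B1 [B2 B3]].
    destruct (Z.eq_dec (Z.abs y) (Z.abs w)). lia.
    assert (2 <= length (filter X (ents n)))%nat; [|lia].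
    apply (C_2 _ _ (Z.abs y) (Z.abs w)); auto using ents_NoDup. }
  assert (Z3 : exists k, entry n k /\ content (p k) = 0).
  { destruct (filter_nonempty X (ents n)) as [x [Hx HX]]; [lia|].
    exists x. split; auto. unfold X, zerob in HX. apply andb_true_iff in HX. destruct HX as [HX _].
    apply Z.eqb_eq; auto. }
  destruct Z3 as [k0 [Hk0 Hk0c]].
  destruct (Zabs k0 Hk0 Hk0c) as [Hj [Hjc _]]. set (j := Z.abs k0) in *.
  assert (Hjpos : 0 < j) by (rewrite entry_iff in Hk0; unfold j; lia).
  assert (Hmjc : content (p (-j)) = 0) by (rewrite Hy2; auto; lia).
  assert (HFa : HF lam s F).
  { split; [|split; [|split; [|split]]].
    - intros b0 Hb0. apply F1; auto.
    - intros b0 b1 Hb0 Hb1 E. apply (shift_inj _ _ t).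
      destruct (F1 b0 Hb0) as [_ [P0 _]]. destruct (F1 b1 Hb1) as [_ [P1 _]]. congruence.
    - intros b0 b1 Hb0 Hb1 E.
      destruct (F1 b0 Hb0) as [E0 [P0 [Q0 _]]]. destruct (F1 b1 Hb1) as [E1 [P1 [Q1 _]]].
      assert (content (p (F b1)) = - content (p (F b0))).
      { rewrite E. rewrite Hy2; auto. lia. }
      rewrite P0, P1 in H.
      assert (content (p (F b0)) = 0) by (rewrite P0; lia).
      pose proof (Z1 _ E0 H0). replace (- F b0) with (F b1) in H1 by lia. rewrite P0, P1 in H1. apply shift_inj in H1. subst.
      rewrite entry_iff in E0. lia.
    - apply (Fstd_of lam n p F t); auto. intros b0 Hb0. destruct (F1 b0 Hb0) as [A1 [A2 _]]. auto.
    - assert (K : forall x, entry n x -> x <> -j -> x < 0 -> inF lam F x = posb (p x)).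
      { intros x Hx Hxj Hxn. unfold posb. destruct (inF lam F x) eqn:E1, (0 <? content (p x)) eqn:E2; auto.
        - exfalso. apply inF_iff in E1. destruct E1 as [b0 [Hb0 <-]].
          destruct (F1 b0 Hb0) as [_ [P0 [Q0 _]]]. rewrite P0 in E2. rewrite Z.ltb_nlt in E2.
          assert (content (p (F b0)) = 0) by (rewrite P0; lia).
          destruct (Z2 j (F b0) Hj Hx Hjc H); lia.
        - exfalso. apply Z.ltb_lt in E2.
          destruct (F2 x Hx) as [b0 [Hb0 Hfb]]. split; [lia|]. intros; lia.
          assert (inF lam F x = true) by (apply inF_iff; eauto). congruence. }
      assert (Hmj : entry n (-j)) by (apply entry_opp; auto).
      destruct (Bool.bool_dec (Nat.even c) s) as [e|ne].
      + assert (inF lam F (-j) = false).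
        { destruct (inF lam F (-j)) eqn:E; auto. apply inF_iff in E. destruct E as [b0 [Hb0 Hfb]].
          destruct (F1 b0 Hb0) as [_ [P0 [_ Q0]]]. rewrite Hfb in P0, Q0.
          rewrite <- P0 in Q0. specialize (Q0 Hmjc). apply Q0 in e. lia. }
        rewrite <- e. unfold c, nneg. f_equal. f_equal. apply filter_ext_in. intros x Hx.
        destruct (x <? 0) eqn:Ex; auto. simpl. apply Z.ltb_lt in Ex.
        destruct (Z.eq_dec x (-j)). subst x. rewrite H. unfold posb. rewrite Hmjc. auto.
        apply K; auto.
      + assert (inF lam F (-j) = true).
        { destruct (F2 (-j) Hmj) as [b0 [Hb0 Hfb]]. split; [lia|]. intros _. split; intros; [lia|congruence].
          apply inF_iff; eauto. }
        rewrite (C_plus1 _ (fun k => (k <? 0) && posb (p k)) _ (-j)); auto using ents_NoDup.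
        * rewrite even_S. revert ne. unfold c, nneg. destruct (Nat.even _); destruct s; simpl; congruence.
        * unfold posb. rewrite Hmjc. apply andb_false_r.
        * rewrite H, andb_true_r. apply Z.ltb_lt; lia.
        * intros x Hx Hxj. destruct (x <? 0) eqn:Ex; auto. simpl. apply Z.ltb_lt in Ex. symmetry; apply K; auto. }
  exists t. split; auto. split; [|split; [|split]].
  - intros b0 Hb0. apply F1; auto.
  - intros b0 Hb0. apply F1; auto.
  - destruct (coverage lam s F Hn HFa j Hj) as [b0 [Hb0 Hfb]]. exists b0. split; auto.
    destruct (F1 b0 Hb0) as [_ [P0 _]]. rewrite <- P0.
    destruct Hfb as [-> | ->]; auto.
  - auto.
Qed.

Lemma split_Hp lam s p F (P : box -> bool) : NoDup lam -> DStd (length lam) p ->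
  nboxes (length lam) p zerob = 2%nat -> nboxes (length lam) p P = length lam ->
  nboxes (length lam) p (fun b => negb (P b)) = length lam ->
  (forall k, entry (length lam) k -> P (p k) = true -> 0 <= content (p k)) ->
  (forall k, entry (length lam) k -> P (p k) = false -> content (p k) <= 0) ->
  filling_of lam (fun b e => entry (length lam) e /\ p e = b /\ P b = true) F ->
  Nat.even (nneg (length lam) p P) = s ->
  DYoung (length lam) p /\ exists t, Hp lam s p F t.
Proof.
  intros Hn [[Hy1 [Hy2 Hsk]] Hst] Hz HP1 HP2 Hpos Hneg Hfill Hpar.
  split; [exact (conj Hy1 (conj Hy2 Hsk))|].
  set (n := length lam) in *.
  unfold nboxes in *.
  set (X := fun k => negb (paired p k) || (0 <? k)) in *.
  assert (HX : forall k, entry n k -> X k = true).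
  { apply C_all. rewrite ents_length.
    rewrite (C_split _ X (fun k => P (p k))).
    rewrite (filter_ext _ (fun k => P (p k) && X k)) by (intros; apply andb_comm).
    rewrite (filter_ext (fun x => X x && negb (P (p x))) (fun k => negb (P (p k)) && X k)) by (intros; apply andb_comm).
    unfold X; lia. }
  assert (NP : forall k, entry n k -> p k <> p (-k)).
  { intros k Hk E. destruct (Z_lt_le_dec k 0).
    - specialize (HX k Hk). unfold X in HX. destruct (paired p k) eqn:E2.
      + simpl in HX. apply Z.ltb_lt in HX. lia.
      + apply paired_iff in E. congruence.
    - assert (k <> 0) by (rewrite entry_iff in Hk; lia).
      specialize (HX (-k) (entry_opp _ _ Hk)). unfold X in HX. destruct (paired p (-k)) eqn:E2.
      + simpl in HX. apply Z.ltb_lt in HX. lia.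
      + assert (paired p (-k) = true); [|congruence]. apply paired_iff. rewrite Z.opp_involutive. auto. }
  assert (CNT : forall Q : box -> bool, length (filter (fun k => Q (p k) && X k) (ents n)) = length (filter (fun k => Q (p k)) (ents n))).
  { intros Q. f_equal. apply filter_ext_in. intros k Hk. rewrite HX; auto. apply andb_true_r. }
  pose proof (CNT zerob) as C1; pose proof (CNT P) as C2; pose proof (CNT (fun b => negb (P b))) as C3.
  unfold X in C1, C2, C3. rewrite C1 in Hz. rewrite C2 in HP1. rewrite C3 in HP2. clear C1 C2 C3.
  apply fill_gen in Hfill. destruct Hfill as [t [F1 [F2 F3]]].
  assert (Key : forall k, entry n k -> P (p k) = inF lam F k).
  { intros k Hk. destruct (P (p k)) eqn:E, (inF lam F k) eqn:E2; auto.
    - apply F2 in E; auto. apply inF_iff in E. congruence.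
    - apply inF_iff in E2. destruct E2 as [b0 [Hb0 <-]]. destruct (F1 b0 Hb0) as [_ [P0 Q0]]. congruence. }
  assert (Z3 : forall a b c, entry n a -> entry n b -> entry n c -> a <> b -> a <> c -> b <> c ->
     content (p a) = 0 -> content (p b) = 0 -> content (p c) = 0 -> False).
  { intros a b c Ha Hb Hc ? ? ? ? ? ?.
    assert (3 <= length (filter (fun k => zerob (p k)) (ents n)))%nat; [|lia].
    apply (C_3 _ _ a b c); auto using ents_NoDup; unfold zerob; apply Z.eqb_eq; auto. }
  assert (Z2 : forall k l, entry n k -> entry n l -> content (p k) = 0 -> content (p l) = 0 -> l = k \/ l = -k).
  { intros k l Hk Hl H0 H1. apply NNPP. intros Hne. apply (Z3 k (-k) l); auto using entry_opp.
    rewrite entry_iff in Hk; lia. rewrite Hy2; auto; lia. }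
  assert (HFa : HF lam s F).
  { split; [|split; [|split; [|split]]].
    - intros b0 Hb0. apply F1; auto.
    - intros b0 b1 Hb0 Hb1 E. apply (shift_inj _ _ t).
      destruct (F1 b0 Hb0) as [_ [P0 _]]. destruct (F1 b1 Hb1) as [_ [P1 _]]. congruence.
    - intros b0 b1 Hb0 Hb1 E.
      destruct (F1 b0 Hb0) as [E0 [P0 Q0]]. destruct (F1 b1 Hb1) as [E1 [P1 Q1]].
      set (k := F b0) in *.
      assert (Pk : P (p k) = true) by (rewrite P0; auto).
      assert (Pmk : P (p (-k)) = true) by (replace (-k) with (F b1) by lia; rewrite P1; auto).
      assert (Ck : content (p k) = 0).
      { pose proof (Hpos _ E0 Pk). pose proof (Hpos _ (entry_opp _ _ E0) Pmk). rewrite Hy2 in H0; auto. lia. }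
      assert (knz : k <> -k) by (rewrite entry_iff in E0; lia).
      assert (length (filter (fun l => negb (P (p l))) (ents n)) + 2 <= length (filter (fun l => P (p l)) (ents n)))%nat; [|lia].
      rewrite C_neg.
      rewrite (C_rm _ k (fun l => P (p l))); auto using ents_NoDup.
      rewrite (C_rm _ (-k) (fun l => P (p l) && negb (l =? k))); auto using ents_NoDup, in_ents_opp.
      2: { cbv beta. rewrite Pmk. simpl. destruct (Z.eqb_spec (-k) k); simpl; auto; lia. }
      match goal with |- (?a + 2 <= S (S ?b))%nat => cut (a <= b)%nat; [lia|] end.
      apply C_mono. intros l Hl HH. apply negb_true_iff in HH.
      pose proof (Hneg _ (entry_opp _ _ Hl) HH). rewrite Hy2 in H; auto.
      assert (content (p l) <> 0).
      { intros C0. destruct (Z2 k l E0 Hl Ck C0) as [->| ->]; [congruence|].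
        rewrite Z.opp_involutive in HH. congruence. }
      destruct (P (p l)) eqn:E2.
      + simpl. destruct (Z.eqb_spec l k); [subst; congruence|]. destruct (Z.eqb_spec l (-k)); [subst; rewrite Hy2 in H0; auto; lia|]. auto.
      + pose proof (Hneg _ Hl E2). lia.
    - apply (Fstd_of lam n p F t); auto. intros b0 Hb0. destruct (F1 b0 Hb0) as [A1 [A2 _]]. auto.
    - rewrite <- Hpar. unfold nneg. f_equal. f_equal. apply filter_ext_in. intros k Hk. rewrite Key; auto. }
  exists t. split; auto. split; [|split; [|split]].
  - intros b0 Hb0. apply F1; auto.
  - intros b0 Hb0. destruct (F1 b0 Hb0) as [E0 [P0 Q0]]. rewrite <- P0. apply Hpos; auto. congruence.
  - destruct (filter_nonempty (fun k => zerob (p k)) (ents n)) as [x [Hx HX0]]; [lia|].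
    unfold zerob in HX0. apply Z.eqb_eq in HX0.
    destruct (coverage lam s F Hn HFa x Hx) as [b0 [Hb0 Hfb]]. exists b0. split; auto.
    destruct (F1 b0 Hb0) as [_ [P0 _]]. rewrite <- P0.
    destruct Hfb as [-> | ->]; auto. rewrite Hy2; auto. lia.
  - auto.
Qed.

Lemma R0_Hp lam s p F : NoDup lam -> R0 lam s p F -> DYoung (length lam) p /\ exists t, Hp lam s p F t.
Proof.
  intros Hn [H|[H|H]].
  - apply Rbox_Hp; auto.
  - unfold Rsplit in H; cbv zeta in H.
    destruct H as [HD [Hz [c0 [side [H1 [H2 [H3 [H4 [H5 H6]]]]]]]]].
    eapply (split_Hp lam s p F (fun b => Bool.eqb (fst b <=? c0) side)); eauto.
  - unfold Rsplit in H; cbv zeta in H.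
    destruct H as [HD [Hz [c0 [side [H1 [H2 [H3 [H4 [H5 H6]]]]]]]]].
    eapply (split_Hp lam s p F (fun b => Bool.eqb (snd b <=? c0) side)); eauto.
Qed.

Lemma content_shift b t : content (shift b t) = content b + content t.
Proof. destruct b, t; unfold content, shift; simpl; lia. Qed.

Lemma pos_inF lam s p F t : NoDup lam -> DYoung (length lam) p -> Hp lam s p F t ->
  forall l, entry (length lam) l -> content (p l) <> 0 -> (inF lam F l = true <-> 0 < content (p l)).
Proof.
  intros Hn [_ [Hy2 _]] [HFa [Hpb [Hge _]]] l Hl Hc. split.
  - intros H. apply inF_iff in H. destruct H as [b [Hb <-]]. rewrite Hpb; auto. specialize (Hge b Hb).
    rewrite Hpb in Hc; auto. lia.
  - intros H. destruct (coverage lam s F Hn HFa l Hl) as [b [Hb [E|E]]].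
    + apply inF_iff; eauto.
    + specialize (Hge b Hb). rewrite <- Hpb, E in Hge; auto. rewrite Hy2 in Hge; auto. lia.
Qed.

Lemma asym lam s p F F' t t' : NoDup lam -> DYoung (length lam) p -> Hp lam s p F t -> Hp lam s p F' t' ->
  forall k, entry (length lam) k -> inF lam F k = true -> inF lam F' k = false -> False.
Proof.
  intros Hn HY H1 H2 k Hk I1 I2.
  pose proof HY as [_ [Hy2 _]].
  pose proof H1 as [HF1 [Hpb1 [Hge1 [_ H61]]]]. pose proof H2 as [HF2 [Hpb2 [Hge2 _]]].
  apply inF_iff in I1. destruct I1 as [b0 [Hb0 E0]].
  destruct (coverage lam s F' Hn HF2 k Hk) as [b1 [Hb1 [E1|E1]]].
  { assert (inF lam F' k = true) by (apply inF_iff; eauto). congruence. }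
  assert (Ck : content (p k) = 0).
  { pose proof (Hge1 b0 Hb0). pose proof (Hge2 b1 Hb1). rewrite <- Hpb1, E0 in H; auto.
    rewrite <- Hpb2, E1, Hy2 in H0; auto. lia. }
  assert (Eq : forall l, entry (length lam) l -> l <> k -> l <> -k -> inF lam F l = inF lam F' l).
  { intros l Hl N1 N2. assert (content (p l) <> 0).
    { intros C0. destruct (H61 k l Hk Hl Ck C0); auto. }
    destruct (inF lam F l) eqn:A1, (inF lam F' l) eqn:A2; auto.
    - apply (pos_inF lam s p F t) in A1; auto. apply (pos_inF lam s p F' t') in A1; auto. congruence.
    - apply (pos_inF lam s p F' t') in A2; auto. apply (pos_inF lam s p F t) in A2; auto. congruence. }
  assert (Fm : inF lam F (-k) = false).
  { destruct (inF lam F (-k)) eqn:A; auto. apply inF_iff in A. destruct A as [b2 [Hb2 E2]].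
    exfalso. destruct HF1 as [_ [_ [Hc _]]]. apply (Hc b0 b2); auto. lia. }
  assert (F'm : inF lam F' (-k) = true) by (apply inF_iff; exists b1; split; auto; lia).
  destruct HF1 as [_ [_ [_ [_ P1]]]]. destruct HF2 as [_ [_ [_ [_ P2]]]].
  assert (knz : k <> 0) by (rewrite entry_iff in Hk; lia).
  destruct (Z_lt_le_dec 0 k).
  - rewrite (C_plus1 _ (fun l => (l <? 0) && inF lam F l) _ (-k)) in P2; auto using ents_NoDup, in_ents_opp.
    + rewrite even_S, P1 in P2. destruct s; discriminate.
    + rewrite Fm. apply andb_false_r.
    + rewrite F'm, andb_true_r. apply Z.ltb_lt. lia.
    + intros x Hx Nx. destruct (Z.eq_dec x k).
      * rewrite e. replace (k <? 0) with false by (symmetry; apply Z.ltb_nlt; lia). auto.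
      * rewrite Eq; auto.
  - rewrite (C_plus1 _ (fun l => (l <? 0) && inF lam F' l) _ k) in P1; auto using ents_NoDup.
    + rewrite even_S, P2 in P1. destruct s; discriminate.
    + rewrite I2. apply andb_false_r.
    + assert (inF lam F k = true) by (apply inF_iff; eauto). rewrite H, andb_true_r. apply Z.ltb_lt. lia.
    + intros x Hx Nx. destruct (Z.eq_dec x (-k)).
      * rewrite e. replace (-k <? 0) with false by (symmetry; apply Z.ltb_nlt; lia). auto.
      * rewrite Eq; auto.
Qed.

Lemma part1 lam s p F F' : NoDup lam -> R0 lam s p F -> R0 lam s p F' ->
  forall b, In b lam -> F b = F' b.
Proof.
  intros Hn R1 R2 b Hb.
  destruct (R0_Hp lam s p F Hn R1) as [HY [t H1]]. destruct (R0_Hp lam s p F' Hn R2) as [_ [t' H2]].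
  assert (Eq : forall k, entry (length lam) k -> inF lam F k = inF lam F' k).
  { intros k Hk. destruct (inF lam F k) eqn:A1, (inF lam F' k) eqn:A2; auto; exfalso.
    - apply (asym lam s p F F' t t' Hn HY H1 H2 k Hk A1 A2).
    - apply (asym lam s p F' F t' t Hn HY H2 H1 k Hk A2 A1). }
  pose proof H1 as [[HE1 _] [Hpb1 _]]. pose proof H2 as [_ [Hpb2 _]].
  assert (St : forall b0, In b0 lam -> exists b1, In b1 lam /\ shift b0 t = shift b1 t' /\ F' b1 = F b0).
  { intros b0 Hb0. assert (inF lam F' (F b0) = true).
    { rewrite <- Eq; auto. apply inF_iff; eauto. }
    apply inF_iff in H. destruct H as [b1 [Hb1 E]]. exists b1. split; auto. split; auto.
    rewrite <- Hpb1, <- Hpb2, E; auto. }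
  assert (tt : t = t').
  { assert (shift_zero : (fst t - fst t', snd t - snd t') = (0,0)).
    { apply (transl_zero lam). 
      - intros b0 Hb0. destruct (St b0 Hb0) as [b1 [Hb1 [E _]]].
        replace (shift b0 (fst t - fst t', snd t - snd t')) with b1; auto.
        destruct b0, b1, t, t'; unfold shift in *; simpl in *. inversion E. f_equal; lia.
      - intros ->. contradiction. }
    inversion shift_zero. destruct t, t'; simpl in *; f_equal; lia. }
  subst t'. destruct (St b Hb) as [b1 [Hb1 [E E']]]. apply shift_inj in E. subst. auto.
Qed.

Lemma part3 lam s p p' F : NoDup lam -> R0 lam s p F -> R0 lam s p' F ->
  same_tableau (length lam) p p'.
Proof.
  intros Hn R1 R2 k Hk.
  destruct (R0_Hp lam s p F Hn R1) as [[_ [Hy2 _]] [t [HF1 [Hpb1 [Hge1 [[z1 [Hz1 Ez1]] _]]]]]].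
  destruct (R0_Hp lam s p' F Hn R2) as [[_ [Hy2' _]] [t' [_ [Hpb2 [Hge2 [[z2 [Hz2 Ez2]] _]]]]]].
  assert (ct : content t = content t').
  { pose proof (Hge1 z2 Hz2). pose proof (Hge2 z1 Hz1). rewrite content_shift in *. lia. }
  destruct (coverage lam s F Hn HF1 k Hk) as [b [Hb [E|E]]].
  - subst. rewrite Hpb1, Hpb2, !content_shift; auto. lia.
  - replace k with (- F b) by lia. destruct HF1 as [HE _].
    rewrite Hy2, Hy2', Hpb1, Hpb2, !content_shift; auto. lia.
Qed.

Definition finv (lam : list box) (F : box -> Z) (k : Z) : box :=
  match find (fun b0 => Z.eqb (F b0) k) lam with Some b => b | None => (0,0) end.

Definition rot (A : Z) (b : box) : box := (A - fst b, A - snd b).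

Definition place (lam : list box) (F : box -> Z) (t : box) (A : Z) : Tab :=
  fun k => if inF lam F k then shift (finv lam F k) t else rot A (shift (finv lam F (-k)) t).

Lemma finv_spec lam F k : inF lam F k = true -> In (finv lam F k) lam /\ F (finv lam F k) = k.
Proof.
  intros H. unfold finv. destruct (find (fun b0 => F b0 =? k) lam) eqn:E.
  - apply find_some in E. destruct E as [E1 E2]. apply Z.eqb_eq in E2. auto.
  - exfalso. apply inF_iff in H. destruct H as [b [Hb Hb']].
    pose proof (find_none _ _ E b Hb). simpl in H. rewrite Hb', Z.eqb_refl in H. discriminate.
Qed.

Lemma place_pos lam s F t A b0 : HF lam s F -> In b0 lam -> place lam F t A (F b0) = shift b0 t.
Proof.
  intros [_ [Hi _]] Hb0. unfold place.
  assert (inF lam F (F b0) = true) by (apply inF_iff; eauto). rewrite H.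
  destruct (finv_spec lam F (F b0) H) as [H1 H2]. f_equal. apply Hi; auto.
Qed.

Lemma place_neg lam s F t A b0 : HF lam s F -> In b0 lam -> place lam F t A (- F b0) = rot A (shift b0 t).
Proof.
  intros [_ [Hi [Hc _]]] Hb0. unfold place.
  assert (inF lam F (- F b0) = false).
  { destruct (inF lam F (- F b0)) eqn:E; auto. apply inF_iff in E. destruct E as [b1 [Hb1 E]].
    exfalso. apply (Hc b1 b0); auto. }
  rewrite H, Z.opp_involutive.
  assert (inF lam F (F b0) = true) by (apply inF_iff; eauto).
  destruct (finv_spec lam F (F b0) H0) as [H1 H2]. do 2 f_equal. apply Hi; auto.
Qed.

Lemma place_char lam s F t A : NoDup lam -> HF lam s F -> forall k, entry (length lam) k ->
  exists b0, In b0 lam /\ ((k = F b0 /\ place lam F t A k = shift b0 t) \/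
                           (k = - F b0 /\ place lam F t A k = rot A (shift b0 t))).
Proof.
  intros Hn HFa k Hk. destruct (coverage lam s F Hn HFa k Hk) as [b0 [Hb0 [E|E]]]; exists b0; split; auto.
  - left. subst. split; auto. apply place_pos with s; auto.
  - right. replace k with (- F b0) by lia. split; auto. apply place_neg with s; auto.
Qed.

Lemma inF_neg lam s F b0 : HF lam s F -> In b0 lam -> inF lam F (- F b0) = false.
Proof.
  intros [_ [_ [Hc _]]] Hb0. destruct (inF lam F (- F b0)) eqn:E; auto. apply inF_iff in E. destruct E as [b1 [Hb1 E]].
  exfalso. apply (Hc b1 b0); auto.
Qed.

Lemma inF_pos lam F b0 : In b0 lam -> inF lam F (F b0) = true.
Proof. intros; apply inF_iff; eauto. Qed.

Lemma HF_entry lam s F b0 : HF lam s F -> In b0 lam -> entry (length lam) (F b0).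
Proof. intros [H _] Hb; auto. Qed.

Lemma HF_entryN lam s F b0 : HF lam s F -> In b0 lam -> entry (length lam) (- F b0).
Proof. intros [H _] Hb; apply entry_opp; auto. Qed.

Lemma rot_inj A a b : rot A a = rot A b -> a = b.
Proof. destruct a, b; unfold rot; cbn [fst snd]; intros H; inversion H; f_equal; lia. Qed.

Lemma shift_eq b t : shift b t = (fst b + fst t, snd b + snd t).
Proof. reflexivity. Qed.

Lemma part2 lam s p F m : NoDup lam -> skew (fun b => In b lam) -> 1 <= m -> R0 lam s p F ->
  exists q, Rm lam m s q F.
Proof.
  intros Hn Hsk Hm HR0.
  destruct (R0_Hp lam s p F Hn HR0) as [_ [t [HFa [_ [Hge [[z1 [Hz1 Ez1]] _]]]]]].
  set (t' := (fst t, snd t + m)).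
  assert (Hge' : forall b0, In b0 lam -> m <= content (shift b0 t')).
  { intros b0 Hb0. specialize (Hge b0 Hb0). rewrite content_shift in *. unfold t', content in *; cbn [fst snd] in *. lia. }
  assert (HR : exists R, forall b0, In b0 lam -> 2 * fst (shift b0 t') < R /\ R < 2 * snd (shift b0 t')).
  { destruct lam as [|b l]. { exists 0. intros _ []. }
    destruct (argmax fst (b :: l)) as [bs [Hbs Hmax]]; [discriminate|].
    exists (2 * fst (shift bs t') + 1). intros b0 Hb0. split.
    - specialize (Hmax b0 Hb0). rewrite !shift_eq. cbn [fst snd]. lia.
    - apply Z.nle_gt. intros HH.
      assert (In (fst bs, snd b0) (b :: l)).
      { apply (Hsk b0 (fst bs, snd b0) bs); auto; cbn [fst snd];
        pose proof (Hge' b0 Hb0); pose proof (Hge' bs Hbs); unfold content in *; rewrite !shift_eq in *; cbn [fst snd] in *; lia. }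
      pose proof (Hge' _ H). pose proof (Hge' b0 Hb0); pose proof (Hge' bs Hbs).
      unfold content in *; rewrite !shift_eq in *; cbn [fst snd] in *; lia. }
  destruct HR as [R HR].
  set (n := length lam) in *.
  set (q := place lam F t' R).
  assert (QP : forall b0, In b0 lam -> q (F b0) = shift b0 t') by (intros; apply place_pos with s; auto).
  assert (QN : forall b0, In b0 lam -> q (- F b0) = rot R (shift b0 t')) by (intros; apply place_neg with s; auto).
  assert (QC : forall k, entry n k -> exists b0, In b0 lam /\ ((k = F b0 /\ q k = shift b0 t') \/
                           (k = - F b0 /\ q k = rot R (shift b0 t')))) by (apply place_char with s; auto).
  assert (Hfilled : forall b0, In b0 lam -> entry n (F b0) /\ entry n (- F b0)).
  { intros; split; [apply HF_entry with s|apply HF_entryN with s]; auto. }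
  assert (NE : forall k l, entry n k -> entry n l -> k <> l -> q k = q l -> False).
  { intros k l Hk Hl Hkl Heq.
    destruct (QC k Hk) as [b0 [Hb0 [[-> Pk]|[-> Pk]]]]; destruct (QC l Hl) as [b1 [Hb1 [[-> Pl]|[-> Pl]]]];
      rewrite Pk, Pl in Heq; pose proof (HR b0 Hb0); pose proof (HR b1 Hb1).
    - apply shift_inj in Heq; subst; auto.
    - apply (f_equal fst) in Heq. unfold rot in Heq; cbn [fst] in Heq. lia.
    - apply (f_equal fst) in Heq. unfold rot in Heq; cbn [fst] in Heq. lia.
    - apply rot_inj, shift_inj in Heq; subst; auto. }
  exists q. unfold Rm; cbv zeta. fold n.
  split; [split; [split; [|split]|] | split; [|split]].
  - intros k l Hk Hl Hkl Heq. exfalso. eauto.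
  - intros k Hk. destruct (QC k Hk) as [b0 [Hb0 [[-> Pk]|[-> Pk]]]].
    + rewrite Pk, QN; auto. unfold content, rot; cbn [fst snd]. lia.
    + rewrite Pk, Z.opp_involutive, QP; auto. unfold content, rot; cbn [fst snd]. lia.
  - intros a b c [ka [Hka Ea]] [kc [Hkc Ec]] Hab Hbc.
    destruct (QC ka Hka) as [a0 [Ha0 [[-> Pa]|[-> Pa]]]]; destruct (QC kc Hkc) as [c0 [Hc0 [[-> Pc]|[-> Pc]]]];
      rewrite Pa in Ea; rewrite Pc in Ec; subst a c; pose proof (HR a0 Ha0); pose proof (HR c0 Hc0).
    + assert (In (fst b - fst t', snd b - snd t') lam).
      { apply (Hsk a0 _ c0); auto; rewrite !shift_eq in *; cbn [fst snd] in *; lia. }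
      exists (F (fst b - fst t', snd b - snd t')). split; [apply Hfilled; auto|].
      rewrite QP; auto. rewrite shift_eq. destruct b; cbn [fst snd]; f_equal; lia.
    + exfalso. unfold rot in *; cbn [fst snd] in *. lia.
    + exfalso. unfold rot in *; cbn [fst snd] in *. lia.
    + assert (In (R - fst b - fst t', R - snd b - snd t') lam).
      { apply (Hsk c0 _ a0); auto; unfold rot in *; rewrite !shift_eq in *; cbn [fst snd] in *; lia. }
      exists (- F (R - fst b - fst t', R - snd b - snd t')). split; [apply Hfilled; auto|].
      rewrite QN; auto. unfold rot; rewrite shift_eq. destruct b; cbn [fst snd]; f_equal; lia.
  - intros k l Hk Hl Hrel.
    assert (NPk : forall k, entry n k -> paired q k = false).
    { intros x Hx. destruct (paired q x) eqn:E; auto. apply paired_iff in E. exfalso.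
      apply (NE x (-x)); auto using entry_opp. rewrite entry_iff in Hx; lia. }
    unfold lval, rval. rewrite !NPk; auto.
    destruct (QC k Hk) as [b0 [Hb0 [[-> Pk]|[-> Pk]]]]; destruct (QC l Hl) as [b1 [Hb1 [[-> Pl]|[-> Pl]]]];
      rewrite Pk, Pl in Hrel; pose proof (HR b0 Hb0); pose proof (HR b1 Hb1).
    + destruct HFa as [_ [_ [_ [Hs _]]]]. apply Hs; auto. unfold rel. rewrite !shift_eq in *; cbn [fst snd] in *; lia.
    + exfalso. unfold rot in *; cbn [fst snd] in *. lia.
    + exfalso. unfold rot in *; cbn [fst snd] in *. lia.
    + destruct HFa as [_ [_ [_ [Hs _]]]]. cut (F b1 < F b0); [lia|]. apply Hs; auto.
      unfold rel. unfold rot in *; rewrite !shift_eq in *; cbn [fst snd] in *; lia.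
  - split.
    + exists (F z1). split; [apply Hfilled; auto|]. rewrite QP; auto.
      rewrite content_shift in *. unfold t', content in *; cbn [fst snd] in *. lia.
    + intros k Hk Hc. destruct (QC k Hk) as [b0 [Hb0 [[-> Pk]|[-> Pk]]]]; rewrite Pk in *.
      * apply Hge'; auto.
      * pose proof (Hge' b0 Hb0). unfold content, rot in *; cbn [fst snd] in *. lia.
  - exists t'. split.
    + intros b. split.
      * intros [e [He [Pe Ce]]]. destruct (QC e He) as [b0 [Hb0 [[-> Pk]|[-> Pk]]]]; rewrite Pk in Pe.
        -- eauto.
        -- exfalso. subst b. pose proof (Hge' b0 Hb0). unfold content, rot in *; cbn [fst snd] in *. lia.
      * intros [b0 [Hb0 ->]]. exists (F b0). split; [apply Hfilled; auto|]. split; auto.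
        pose proof (Hge' b0 Hb0). lia.
    + intros b0 Hb0 e. split.
      * intros [He [Pe Ce]]. destruct (QC e He) as [b1 [Hb1 [[-> Pk]|[-> Pk]]]]; rewrite Pk in Pe.
        -- apply shift_inj in Pe. subst; auto.
        -- exfalso. rewrite <- Pe in Ce. pose proof (Hge' b1 Hb1). unfold content, rot in *; cbn [fst snd] in *. lia.
      * intros ->. split; [apply Hfilled; auto|]. split; auto. pose proof (Hge' b0 Hb0). lia.
  - pose proof HFa as [_ [_ [_ [_ Hpar]]]]. rewrite <- Hpar. unfold nneg. f_equal. f_equal.
    apply filter_ext_in. intros k Hk. f_equal.
    destruct (QC k Hk) as [b0 [Hb0 [[-> Pk]|[-> Pk]]]]; rewrite Pk.
    + rewrite inF_pos; auto. unfold posb. apply Z.ltb_lt. pose proof (Hge' b0 Hb0). lia.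
    + rewrite (inF_neg lam s); auto. unfold posb. apply Z.ltb_nlt. pose proof (Hge' b0 Hb0).
      unfold content, rot in *; cbn [fst snd] in *. lia.
Qed.

Lemma place_c2 lam s F t A : NoDup lam -> HF lam s F -> forall k, entry (length lam) k ->
  content (place lam F t A (- k)) = - content (place lam F t A k).
Proof.
  intros Hn HFa k Hk. destruct (place_char lam s F t A Hn HFa k Hk) as [b0 [Hb0 [[-> Pk]|[-> Pk]]]].
  + rewrite Pk, (place_neg lam s); auto. unfold content, rot; cbn [fst snd]. lia.
  + rewrite Pk, Z.opp_involutive, (place_pos lam s); auto. unfold content, rot; cbn [fst snd]. lia.
Qed.

Lemma helper_pos lam s F t A a0 c0 b : NoDup lam -> skew (fun b => In b lam) -> HF lam s F ->
  In a0 lam -> In c0 lam ->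
  fst (shift a0 t) <= fst b <= fst (shift c0 t) -> snd (shift a0 t) <= snd b <= snd (shift c0 t) ->
  inD (length lam) (place lam F t A) b.
Proof.
  intros Hn Hsk HFa Ha Hc H1 H2.
  assert (In (fst b - fst t, snd b - snd t) lam).
  { apply (Hsk a0 _ c0); auto; rewrite !shift_eq in *; cbn [fst snd] in *; lia. }
  exists (F (fst b - fst t, snd b - snd t)). split; [apply HF_entry with s; auto|].
  rewrite (place_pos lam s); auto. rewrite shift_eq. destruct b; cbn [fst snd]; f_equal; lia.
Qed.

Lemma helper_neg lam s F t A a0 c0 b : NoDup lam -> skew (fun b => In b lam) -> HF lam s F ->
  In a0 lam -> In c0 lam ->
  fst (rot A (shift a0 t)) <= fst b <= fst (rot A (shift c0 t)) ->
  snd (rot A (shift a0 t)) <= snd b <= snd (rot A (shift c0 t)) ->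
  inD (length lam) (place lam F t A) b.
Proof.
  intros Hn Hsk HFa Ha Hc H1 H2.
  assert (In (A - fst b - fst t, A - snd b - snd t) lam).
  { apply (Hsk c0 _ a0); auto; unfold rot in *; rewrite !shift_eq in *; cbn [fst snd] in *; lia. }
  exists (- F (A - fst b - fst t, A - snd b - snd t)). split; [apply HF_entryN with s; auto|].
  rewrite (place_neg lam s); auto. unfold rot; rewrite shift_eq. destruct b; cbn [fst snd]; f_equal; lia.
Qed.

Lemma inD_place lam s F t A b : NoDup lam -> HF lam s F -> inD (length lam) (place lam F t A) b ->
  exists b0, In b0 lam /\ (b = shift b0 t \/ b = rot A (shift b0 t)).
Proof.
  intros Hn HFa [k [Hk <-]]. destruct (place_char lam s F t A Hn HFa k Hk) as [b0 [Hb0 [[_ P]|[_ P]]]];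
  exists b0; split; auto.
Qed.

Lemma count_inF lam s F : NoDup lam -> HF lam s F ->
  length (filter (inF lam F) (ents (length lam))) = length lam.
Proof.
  intros Hn HFa. transitivity (length (map F lam)); [|apply length_map]. apply Permutation_length.
  apply NoDup_Permutation.
  - apply NoDup_filter, ents_NoDup.
  - apply NoDup_map_on; auto. apply HFa.
  - intros x. rewrite filter_In, in_map_iff, inF_iff. split.
    + intros [_ [b [Hb E]]]. eauto.
    + intros [b [E Hb]]. subst. split; [apply HF_entry with s; auto|]. eauto.
Qed.

Lemma nboxes_nopair n p Q : (forall k, entry n k -> paired p k = false) ->
  nboxes n p Q = length (filter (fun k => Q (p k)) (ents n)).
Proof.
  intros H. unfold nboxes. f_equal. apply filter_ext_in. intros k Hk. rewrite H; auto. apply andb_true_r.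
Qed.

Ltac crunch := unfold rot, content, rel in *; rewrite ?shift_eq in *; cbn [fst snd] in *.

Ltac bdestr := repeat match goal with
  | |- context [if ?c then _ else _] => let E := fresh "E" in destruct c eqn:E
  end;
  repeat match goal with
  | H : (_ && _) = true |- _ => apply andb_true_iff in H; destruct H
  | H : (_ && _) = false |- _ => apply andb_false_iff in H
  | H : (_ =? _) = true |- _ => apply Z.eqb_eq in H
  | H : (_ =? _) = false |- _ => apply Z.eqb_neq in H
  | H : (_ =? _) = false \/ _ |- _ => destruct H
  | H : _ \/ (_ =? _) = false |- _ => destruct H
  end.

Definition Imp (A B : Prop) : Prop := A -> B.

Ltac wrap H := match type of H with
  | ?A -> False => idtac
  | ?A -> ?B => change (Imp A B) in H
  | _ => idtac end.

Ltac simp_imps := repeat match goal with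
  | H : Imp ?A ?B |- _ =>
      first [ let HA := fresh in assert (HA : A) by lia; specialize (H HA); clear HA; wrap H
            | assert (~ A) by lia; clear H ]
  end.

Ltac split1 := match goal with
  | H : Imp (?u = ?v) ?B |- _ =>
      let HA := fresh in destruct (Z.eq_dec u v) as [HA|HA]; [specialize (H HA); clear HA; wrap H | clear H]
  end.

Ltac finish := bdestr; simp_imps; repeat (first [solve [lia] | split1; simp_imps]); unfold Imp in *; lia.

Lemma build_box lam s F t0 bs z :
  NoDup lam -> skew (fun b => In b lam) -> HF lam s F -> In bs lam -> shift bs t0 = (z,z) ->
  (forall b0, In b0 lam -> fst (shift b0 t0) <= z <= snd (shift b0 t0)) ->
  (forall b0, In b0 lam -> fst (shift b0 t0) = z -> snd (shift b0 t0) <> z -> Z.abs (F bs) < F b0) ->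
  (forall b0, In b0 lam -> snd (shift b0 t0) = z -> fst (shift b0 t0) <> z -> F b0 < - Z.abs (F bs)) ->
  Rbox lam s (place lam F t0 (2*z)) F.
Proof.
  intros Hn Hsk HFa Hbs Ebs Hq CR1 CR2.
  set (n := length lam) in *.
  set (P := place lam F t0 (2*z)).
  set (x := F bs).
  assert (QP : forall b0, In b0 lam -> P (F b0) = shift b0 t0) by (intros; apply place_pos with s; auto).
  assert (QN : forall b0, In b0 lam -> P (- F b0) = rot (2*z) (shift b0 t0)) by (intros; apply place_neg with s; auto).
  assert (QC : forall k, entry n k -> exists b0, In b0 lam /\ ((k = F b0 /\ P k = shift b0 t0) \/
                           (k = - F b0 /\ P k = rot (2*z) (shift b0 t0)))) by (apply place_char with s; auto).
  assert (EbsF : fst (shift bs t0) = z) by (rewrite Ebs; auto).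
  assert (EbsS : snd (shift bs t0) = z) by (rewrite Ebs; auto).
  assert (zeroF : forall b0, In b0 lam -> fst (shift b0 t0) = z -> snd (shift b0 t0) = z -> b0 = bs).
  { intros b0 Hb0 H1 H2. apply (shift_inj _ _ t0). rewrite Ebs. destruct (shift b0 t0). cbn in *. subst; auto. }
  assert (Fx : forall b0, In b0 lam -> fst (shift b0 t0) = z -> snd (shift b0 t0) = z -> F b0 = x).
  { intros b0 Hb0 H1 H2. rewrite (zeroF b0); auto. }
  assert (Hx : entry n x) by (apply HF_entry with s; auto).
  assert (xnz : x <> 0) by (rewrite entry_iff in Hx; lia).
  pose proof HFa as [_ [Hinj [Hcol [HS Hpar]]]].
  assert (PB : forall k, entry n k -> paired P k = ((fst (P k) =? z) && (snd (P k) =? z))).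
  { intros k Hk. apply eq_true_iff_eq. rewrite paired_iff, andb_true_iff, !Z.eqb_eq.
    destruct (QC k Hk) as [b0 [Hb0 [[-> Pk]|[-> Pk]]]].
    - rewrite Pk, QN; auto. pose proof (Hq b0 Hb0). destruct (shift b0 t0) as [u v]. unfold rot; cbn [fst snd] in *.
      split; [intros HH; injection HH; lia|intros [? ?]; f_equal; lia].
    - rewrite Pk, Z.opp_involutive, QP; auto. pose proof (Hq b0 Hb0). destruct (shift b0 t0) as [u v]. unfold rot; cbn [fst snd] in *.
      split; [intros HH; injection HH; lia|intros [? ?]; f_equal; lia]. }
  assert (ZC : forall k, entry n k -> (content (P k) = 0 <-> k = x \/ k = -x)).
  { intros k Hk. destruct (QC k Hk) as [b0 [Hb0 [[-> Pk]|[-> Pk]]]]; rewrite Pk; pose proof (Hq b0 Hb0).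
    - split.
      + intros C0. left. apply Fx; auto; unfold content in C0; lia.
      + intros [E|E]. * apply Hinj in E; auto. subst. unfold content. lia.
        * exfalso. apply (Hcol b0 bs); auto.
    - split.
      + intros C0. right. f_equal. apply Fx; auto; unfold content, rot in C0; cbn [fst snd] in C0; lia.
      + intros [E|E]. * exfalso. apply (Hcol bs b0); auto; unfold x in E; lia.
        * assert (F b0 = F bs) by (unfold x in E; lia). apply Hinj in H0; auto. subst. unfold content, rot; cbn [fst snd]. lia. }
  assert (PK : forall k, entry n k -> posb (P k) = inF lam F k && negb (k =? x)).
  { intros k Hk. destruct (QC k Hk) as [b0 [Hb0 [[-> Pk]|[-> Pk]]]]; rewrite Pk; pose proof (Hq b0 Hb0).
    - rewrite inF_pos; auto. simpl. unfold posb. apply eq_true_iff_eq. rewrite negb_true_iff, Z.ltb_lt, Z.eqb_neq.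
      split. * intros H1 H2. apply Hinj in H2; auto. subst. unfold content in H1. lia.
      * intros H1. unfold content. destruct (Z.eq_dec (snd (shift b0 t0)) (fst (shift b0 t0))); [|lia].
        exfalso. apply H1. apply Fx; auto; lia.
    - rewrite (inF_neg lam s); auto. simpl. unfold posb. apply Z.ltb_nlt. unfold content, rot; cbn [fst snd]. lia. }
  assert (SG : Nat.even (nneg n P posb) = s <-> 0 < x).
  { unfold nneg. destruct (Z_lt_le_dec 0 x).
    - split; auto. intros _. rewrite <- Hpar. f_equal. f_equal. apply filter_ext_in. intros k Hk.
      destruct (k <? 0) eqn:E; auto. simpl. rewrite PK; auto. apply Z.ltb_lt in E.
      destruct (Z.eqb_spec k x); [lia|]. apply andb_true_r.
    - rewrite (C_plus1 _ (fun k => (k <? 0) && posb (P k)) (fun k => (k <? 0) && inF lam F k) x) in Hpar; auto using ents_NoDup.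
      + rewrite even_S in Hpar. split; [|lia]. intros HH. unfold n in HH. rewrite HH in Hpar. destruct s; discriminate.
      + rewrite PK, Z.eqb_refl; auto. rewrite !andb_false_r. auto.
      + unfold x at 2. rewrite inF_pos; auto. rewrite andb_true_r. apply Z.ltb_lt. lia.
      + intros k Hk Hkx. rewrite PK; auto. destruct (Z.eqb_spec k x); [lia|]. rewrite andb_true_r. auto. }
  unfold Rbox; cbv zeta. fold n.
  split; [split; [split; [|split]|]|split].
  -
    intros k l Hk Hl Hkl Heq.
    destruct (QC k Hk) as [b0 [Hb0 [[-> Pk]|[-> Pk]]]]; destruct (QC l Hl) as [b1 [Hb1 [[-> Pl]|[-> Pl]]]];
      rewrite Pk, Pl in Heq; pose proof (Hq b0 Hb0); pose proof (Hq b1 Hb1).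
    + apply shift_inj in Heq; subst; contradiction.
    + assert (fst (shift b0 t0) = z /\ snd (shift b0 t0) = z /\ fst (shift b1 t0) = z /\ snd (shift b1 t0) = z) as [A1 [A2 [A3 A4]]].
      { pose proof (f_equal fst Heq); pose proof (f_equal snd Heq). unfold rot in *; cbn [fst snd] in *. lia. }
      split; [rewrite (zeroF b0), (zeroF b1); auto|rewrite Pk; unfold content; lia].
    + assert (fst (shift b0 t0) = z /\ snd (shift b0 t0) = z /\ fst (shift b1 t0) = z /\ snd (shift b1 t0) = z) as [A1 [A2 [A3 A4]]].
      { pose proof (f_equal fst Heq); pose proof (f_equal snd Heq). unfold rot in *; cbn [fst snd] in *. lia. }
      split; [rewrite (zeroF b0), (zeroF b1); auto; lia|rewrite Pk; unfold content, rot; cbn [fst snd]; lia].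
    + apply rot_inj, shift_inj in Heq; subst; contradiction.
  - apply place_c2 with s; auto.
  -
    intros a b c Ha Hc Hab Hbc.
    destruct (inD_place lam s F t0 (2*z) a Hn HFa Ha) as [a0 [Ha0 [->| ->]]];
    destruct (inD_place lam s F t0 (2*z) c Hn HFa Hc) as [c0 [Hc0 [->| ->]]];
    pose proof (Hq a0 Ha0); pose proof (Hq c0 Hc0).
    + apply (helper_pos lam s F t0 (2*z) a0 c0); auto.
    + destruct (Z_le_dec (fst b) z).
      * apply (helper_pos lam s F t0 (2*z) a0 bs); auto; unfold rot in *; cbn [fst snd] in *; lia.
      * apply (helper_neg lam s F t0 (2*z) bs c0); auto; unfold rot in *; cbn [fst snd] in *; lia.
    + destruct (Z_le_dec (snd b) z).
      * apply (helper_neg lam s F t0 (2*z) a0 bs); auto; unfold rot in *; cbn [fst snd] in *; lia.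
      * apply (helper_pos lam s F t0 (2*z) bs c0); auto; unfold rot in *; cbn [fst snd] in *; lia.
    + apply (helper_neg lam s F t0 (2*z) a0 c0); auto.
  -
    intros k l Hk Hl Hrel. unfold lval, rval. rewrite (PB k Hk), (PB l Hl).
    destruct (QC k Hk) as [b0 [Hb0 [[-> Pk]|[-> Pk]]]]; destruct (QC l Hl) as [b1 [Hb1 [[-> Pl]|[-> Pl]]]];
      rewrite Pk, Pl in *;
      pose proof (Hq b0 Hb0); pose proof (Hq b1 Hb1);
      pose proof (Fx b0 Hb0) as f1; pose proof (Fx b1 Hb1) as f2;
      pose proof (CR1 b0 Hb0) as f3; pose proof (CR1 b1 Hb1) as f4; pose proof (CR2 b0 Hb0) as f5; pose proof (CR2 b1 Hb1) as f6;
      pose proof (HS b0 b1 Hb0 Hb1) as f7; pose proof (HS b1 b0 Hb1 Hb0) as f8;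
      unfold x in *; crunch; wrap f1; wrap f2; wrap f3; wrap f4; wrap f5; wrap f6; wrap f7; wrap f8; finish.
  -
    unfold nboxes. assert (Hax : entry n (Z.abs x)) by (rewrite entry_iff in *; lia).
    apply (C_one _ _ (Z.abs x)); auto using ents_NoDup.
    intros k Hk. unfold zerob. rewrite PB; auto.
    destruct (Z.eqb_spec (content (P k)) 0) as [C0|C0].
    + apply ZC in C0; auto. assert (fst (P k) = z /\ snd (P k) = z) as [-> ->].
      { destruct C0 as [-> | ->]; unfold x; [rewrite QP|rewrite QN]; auto; unfold rot; rewrite Ebs; cbn [fst snd]; lia. }
      rewrite Z.eqb_refl. simpl. rewrite Z.ltb_lt. lia.
    + simpl. split; [discriminate|]. intros ->. exfalso. apply C0. apply ZC; auto. lia.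
  -
    exists t0. split.
    + intros b. split.
      * intros [e [He [Pe [Ce _]]]]. destruct (QC e He) as [b0 [Hb0 [[-> Pk]|[-> Pk]]]]; rewrite Pk in Pe.
        -- eauto.
        -- subst b. pose proof (Hq b0 Hb0). exists bs. split; auto. rewrite Ebs.
           unfold rot, content in *. destruct (shift b0 t0) as [u v]. cbn [fst snd] in *. f_equal; lia.
      * intros [b0 [Hb0 ->]]. exists (F b0). split; [apply HF_entry with s; auto|]. split; auto.
        pose proof (Hq b0 Hb0). split; [unfold content; lia|]. intros C0. rewrite SG.
        rewrite (Fx b0); auto; unfold content in C0; try lia; tauto.
    + intros b0 Hb0 e. split.
      * intros [He [Pe [Ce Ze]]]. destruct (QC e He) as [b1 [Hb1 [[-> Pk]|[-> Pk]]]]; rewrite Pk in Pe.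
        -- apply shift_inj in Pe. subst; auto.
        -- exfalso. pose proof (Hq b0 Hb0). pose proof (Hq b1 Hb1).
           assert (fst (shift b1 t0) = z /\ snd (shift b1 t0) = z /\ content (shift b0 t0) = 0) as [A1 [A2 A3]].
           { pose proof (f_equal fst Pe); pose proof (f_equal snd Pe). unfold rot, content in *; cbn [fst snd] in *. lia. }
           specialize (Ze A3). rewrite SG in Ze. rewrite (Fx b1) in Ze; auto. lia.
      * intros ->. split; [apply HF_entry with s; auto|]. split; auto.
        pose proof (Hq b0 Hb0). split; [unfold content; lia|]. intros C0. rewrite SG.
        rewrite (Fx b0); auto; unfold content in C0; try lia; tauto.
Qed.

Lemma split_rest lam s F t0 bs z A (Ps : box -> bool) :
  NoDup lam -> HF lam s F -> In bs lam -> shift bs t0 = (z,z) ->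
  (forall b0, In b0 lam -> fst (shift b0 t0) <= z <= snd (shift b0 t0)) ->
  (forall b0, In b0 lam -> Ps (shift b0 t0) = true) ->
  (forall b0, In b0 lam -> Ps (rot A (shift b0 t0)) = false) ->
  (forall k, entry (length lam) k -> paired (place lam F t0 A) k = false) /\
  (forall k l, entry (length lam) k -> entry (length lam) l -> k <> l ->
      place lam F t0 A k = place lam F t0 A l -> False) /\
  nboxes (length lam) (place lam F t0 A) zerob = 2%nat /\
  nboxes (length lam) (place lam F t0 A) Ps = length lam /\
  nboxes (length lam) (place lam F t0 A) (fun b => negb (Ps b)) = length lam /\
  (forall k, entry (length lam) k -> Ps (place lam F t0 A k) = true -> 0 <= content (place lam F t0 A k)) /\
  (forall k, entry (length lam) k -> Ps (place lam F t0 A k) = false -> content (place lam F t0 A k) <= 0) /\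
  filling_of lam (fun b e => entry (length lam) e /\ place lam F t0 A e = b /\ Ps b = true) F /\
  Nat.even (nneg (length lam) (place lam F t0 A) Ps) = s.
Proof.
  intros Hn HFa Hbs Ebs Hq Hp1 Hp2.
  set (n := length lam) in *.
  set (P := place lam F t0 A).
  set (x := F bs).
  assert (QP : forall b0, In b0 lam -> P (F b0) = shift b0 t0) by (intros; apply place_pos with s; auto).
  assert (QN : forall b0, In b0 lam -> P (- F b0) = rot A (shift b0 t0)) by (intros; apply place_neg with s; auto).
  assert (QC : forall k, entry n k -> exists b0, In b0 lam /\ ((k = F b0 /\ P k = shift b0 t0) \/
                           (k = - F b0 /\ P k = rot A (shift b0 t0)))) by (apply place_char with s; auto).
  pose proof HFa as [_ [Hinj [Hcol [HS Hpar]]]].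
  assert (zeroF : forall b0, In b0 lam -> content (shift b0 t0) = 0 -> b0 = bs).
  { intros b0 Hb0 H1. pose proof (Hq b0 Hb0). apply (shift_inj _ _ t0). rewrite Ebs.
    unfold content in H1. destruct (shift b0 t0). cbn in *. f_equal; lia. }
  assert (Hx : entry n x) by (apply HF_entry with s; auto).
  assert (xnz : x <> 0) by (rewrite entry_iff in Hx; lia).
  assert (PI : forall k, entry n k -> Ps (P k) = inF lam F k).
  { intros k Hk. destruct (QC k Hk) as [b0 [Hb0 [[-> Pk]|[-> Pk]]]]; rewrite Pk.
    - rewrite Hp1, inF_pos; auto.
    - rewrite Hp2, (inF_neg lam s); auto. }
  assert (NE : forall k l, entry n k -> entry n l -> k <> l -> P k = P l -> False).
  { intros k l Hk Hl Hkl Heq.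
    destruct (QC k Hk) as [b0 [Hb0 [[-> Pk]|[-> Pk]]]]; destruct (QC l Hl) as [b1 [Hb1 [[-> Pl]|[-> Pl]]]];
      rewrite Pk, Pl in Heq.
    - apply shift_inj in Heq; subst; auto.
    - pose proof (Hp1 b0 Hb0). pose proof (Hp2 b1 Hb1). congruence.
    - pose proof (Hp1 b1 Hb1). pose proof (Hp2 b0 Hb0). congruence.
    - apply rot_inj, shift_inj in Heq; subst; auto. }
  assert (NP : forall k, entry n k -> paired P k = false).
  { intros k Hk. destruct (paired P k) eqn:E; auto. apply paired_iff in E. exfalso.
    apply (NE k (-k)); auto using entry_opp. rewrite entry_iff in Hk; lia. }
  split; [exact NP|]. split; [exact NE|].
  assert (ZC : forall k, entry n k -> (content (P k) = 0 <-> k = x \/ k = -x)).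
  { intros k Hk. destruct (QC k Hk) as [b0 [Hb0 [[-> Pk]|[-> Pk]]]]; rewrite Pk; pose proof (Hq b0 Hb0).
    - split.
      + intros C0. left. unfold x. rewrite (zeroF b0); auto.
      + intros [E|E]. * apply Hinj in E; auto. subst. rewrite Ebs. unfold content; cbn; lia.
        * exfalso. apply (Hcol b0 bs); auto.
    - split.
      + intros C0. right. unfold x. rewrite (zeroF b0); auto. unfold content, rot in *; cbn [fst snd] in *; lia.
      + intros [E|E]. * exfalso. apply (Hcol bs b0); auto; unfold x in E; lia.
        * assert (F b0 = F bs) by (unfold x in E; lia). apply Hinj in H0; auto. subst. rewrite Ebs.
          unfold content, rot; cbn [fst snd]. lia. }
  split.
  { rewrite nboxes_nopair; auto. apply (C_two _ _ x (-x)); auto using ents_NoDup, in_ents_opp; [lia|].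
    intros k Hk. unfold zerob. rewrite Z.eqb_eq. apply ZC; auto. }
  assert (CI : length (filter (fun k => Ps (P k)) (ents n)) = n).
  { transitivity (length (filter (inF lam F) (ents n))); [|apply count_inF with s; auto].
    f_equal. apply filter_ext_in. intros; apply PI; auto. }
  split; [rewrite nboxes_nopair; auto|].
  split.
  { rewrite nboxes_nopair; auto. pose proof (C_split (ents n) (fun _ => true) (fun k => Ps (P k))) as CS.
    rewrite filter_true, ents_length in CS. cbn beta in CS. rewrite filter_ext with (g := fun k => Ps (P k)) in CS by auto.
    rewrite filter_ext with (f := fun x => true && negb (Ps (P x))) (g := fun k => negb (Ps (P k))) in CS by auto.
    lia. }
  split.
  { intros k Hk Hk'. destruct (QC k Hk) as [b0 [Hb0 [[-> Pk]|[-> Pk]]]]; rewrite Pk in *.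
    - pose proof (Hq b0 Hb0). unfold content. lia.
    - rewrite Hp2 in Hk'; auto. discriminate. }
  split.
  { intros k Hk Hk'. destruct (QC k Hk) as [b0 [Hb0 [[-> Pk]|[-> Pk]]]]; rewrite Pk in *.
    - rewrite Hp1 in Hk'; auto. discriminate.
    - pose proof (Hq b0 Hb0). unfold content, rot; cbn [fst snd]. lia. }
  split.
  { exists t0. split.
    + intros b. split.
      * intros [e [He [Pe Ce]]]. destruct (QC e He) as [b0 [Hb0 [[-> Pk]|[-> Pk]]]]; rewrite Pk in Pe.
        -- eauto.
        -- subst b. rewrite Hp2 in Ce; auto. discriminate.
      * intros [b0 [Hb0 ->]]. exists (F b0). split; [apply HF_entry with s; auto|]. split; auto.
    + intros b0 Hb0 e. split.
      * intros [He [Pe Ce]]. destruct (QC e He) as [b1 [Hb1 [[-> Pk]|[-> Pk]]]]; rewrite Pk in Pe.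
        -- apply shift_inj in Pe. subst; auto.
        -- exfalso. pose proof (Hp1 b0 Hb0). pose proof (Hp2 b1 Hb1). congruence.
      * intros ->. split; [apply HF_entry with s; auto|]. split; auto. }
  rewrite <- Hpar. unfold nneg. f_equal. f_equal. apply filter_ext_in. intros k Hk. rewrite PI; auto.
Qed.

Lemma col_le lam F t b c : Fstd lam F -> In b lam -> In c lam ->
  snd (shift b t) = snd (shift c t) -> fst (shift b t) <= fst (shift c t) -> F b <= F c.
Proof.
  intros HS Hb Hc H1 H2. destruct (Z.eq_dec (fst (shift b t)) (fst (shift c t))).
  - assert (b = c); [|subst; lia]. apply (shift_inj _ _ t). destruct (shift b t), (shift c t). cbn in *. subst; auto.
  - assert (F b < F c); [|lia]. apply HS; auto. unfold rel. rewrite !shift_eq in *. cbn [fst snd] in *. lia.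
Qed.

Lemma row_le lam F t b c : Fstd lam F -> In b lam -> In c lam ->
  fst (shift b t) = fst (shift c t) -> snd (shift b t) <= snd (shift c t) -> F b <= F c.
Proof.
  intros HS Hb Hc H1 H2. destruct (Z.eq_dec (snd (shift b t)) (snd (shift c t))).
  - assert (b = c); [|subst; lia]. apply (shift_inj _ _ t). destruct (shift b t), (shift c t). cbn in *. subst; auto.
  - assert (F b < F c); [|lia]. apply HS; auto. unfold rel. rewrite !shift_eq in *. cbn [fst snd] in *. lia.
Qed.

Lemma build_div lam s F t0 bs br z :
  NoDup lam -> skew (fun b => In b lam) -> HF lam s F -> In bs lam -> shift bs t0 = (z,z) ->
  In br lam -> shift br t0 = (z, z+1) ->
  (forall b0, In b0 lam -> fst (shift b0 t0) <= z <= snd (shift b0 t0)) ->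
  F bs + F br < 0 ->
  Rsplit true lam s (place lam F t0 (2*z+1)) F.
Proof.
  intros Hn Hsk HFa Hbs Ebs Hbr Ebr Hq Hxy.
  set (A := 2*z+1).
  destruct (split_rest lam s F t0 bs z A (fun b => Bool.eqb (fst b <=? z) true) Hn HFa Hbs Ebs Hq)
    as [NP [NE [Z2 [N1 [N2 [C1 [C2 [FL PA]]]]]]]].
  { intros b0 Hb0. pose proof (Hq b0 Hb0). destruct (Z.leb_spec (fst (shift b0 t0)) z); auto; lia. }
  { intros b0 Hb0. pose proof (Hq b0 Hb0). unfold rot; cbn [fst snd]. destruct (Z.leb_spec (A - fst (shift b0 t0)) z); auto; unfold A in *; lia. }
  set (n := length lam) in *.
  set (P := place lam F t0 A) in *.
  assert (QC : forall k, entry n k -> exists b0, In b0 lam /\ ((k = F b0 /\ P k = shift b0 t0) \/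
                           (k = - F b0 /\ P k = rot A (shift b0 t0)))) by (apply place_char with s; auto).
  pose proof HFa as [_ [Hinj [Hcol [HS Hpar]]]].
  assert (EbsF : fst (shift bs t0) = z) by (rewrite Ebs; auto).
  assert (EbsS : snd (shift bs t0) = z) by (rewrite Ebs; auto).
  assert (EbrF : fst (shift br t0) = z) by (rewrite Ebr; auto).
  assert (EbrS : snd (shift br t0) = z + 1) by (rewrite Ebr; auto).
  assert (Fx : forall b0, In b0 lam -> fst (shift b0 t0) = z -> snd (shift b0 t0) = z -> F b0 = F bs).
  { intros b0 Hb0 H1 H2. f_equal. apply (shift_inj _ _ t0). rewrite Ebs. destruct (shift b0 t0). cbn in *. subst; auto. }
  assert (Fy : forall b0, In b0 lam -> fst (shift b0 t0) = z -> snd (shift b0 t0) = z + 1 -> F b0 = F br).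
  { intros b0 Hb0 H1 H2. f_equal. apply (shift_inj _ _ t0). rewrite Ebr. destruct (shift b0 t0). cbn in *. subst; auto. }
  unfold Rsplit; cbv zeta. fold n. fold A. fold P.
  split; [split; [split; [|split]|]|split; [exact Z2|exists z, true; split; [exact N1|split; [exact N2|split; [exact C1|split; [exact C2|split; [exact FL|exact PA]]]]]]].
  - intros k l Hk Hl Hkl Heq. exfalso. eauto.
  - apply place_c2 with s; auto.
  - intros a b c Ha Hc Hab Hbc.
    destruct (inD_place lam s F t0 A a Hn HFa Ha) as [a0 [Ha0 [->| ->]]];
    destruct (inD_place lam s F t0 A c Hn HFa Hc) as [c0 [Hc0 [->| ->]]];
    pose proof (Hq a0 Ha0); pose proof (Hq c0 Hc0).
    + apply (helper_pos lam s F t0 A a0 c0); auto.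
    + destruct (Z_le_dec (fst b) z).
      * apply (helper_pos lam s F t0 A a0 br); auto; unfold A, rot in *; cbn [fst snd] in *; lia.
      * apply (helper_neg lam s F t0 A br c0); auto; unfold A, rot in *; cbn [fst snd] in *; lia.
    + exfalso. unfold A, rot in *; cbn [fst snd] in *; lia.
    + apply (helper_neg lam s F t0 A a0 c0); auto.
  - intros k l Hk Hl Hrel. unfold lval, rval. rewrite (NP k Hk), (NP l Hl).
    destruct (QC k Hk) as [b0 [Hb0 [[-> Pk]|[-> Pk]]]]; destruct (QC l Hl) as [b1 [Hb1 [[-> Pl]|[-> Pl]]]];
      rewrite Pk, Pl in *;
      pose proof (Hq b0 Hb0); pose proof (Hq b1 Hb1);
      pose proof (col_le lam F t0 b0 bs HS Hb0 Hbs) as f1; pose proof (col_le lam F t0 b1 bs HS Hb1 Hbs) as f2;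
      pose proof (col_le lam F t0 b0 br HS Hb0 Hbr) as f3; pose proof (col_le lam F t0 b1 br HS Hb1 Hbr) as f4;
      pose proof (HS b0 b1 Hb0 Hb1) as f9; pose proof (HS b1 b0 Hb1 Hb0) as f10;
      unfold A in *; crunch; wrap f1; wrap f2; wrap f3; wrap f4; wrap f9; wrap f10;
      destruct Hrel as [[? ?]|[? ?]]; destruct (Z.eq_dec (snd b0 + snd t0) z); finish.
Qed.

Lemma build_vert lam s F t0 bs ba z :
  NoDup lam -> skew (fun b => In b lam) -> HF lam s F -> In bs lam -> shift bs t0 = (z,z) ->
  In ba lam -> shift ba t0 = (z-1, z) ->
  (forall b0, In b0 lam -> fst (shift b0 t0) <= z <= snd (shift b0 t0)) ->
  0 < F bs + F ba ->
  Rsplit false lam s (place lam F t0 (2*z-1)) F.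
Proof.
  intros Hn Hsk HFa Hbs Ebs Hba Eba Hq Hxy.
  set (A := 2*z-1).
  destruct (split_rest lam s F t0 bs z A (fun b => Bool.eqb (snd b <=? z - 1) false) Hn HFa Hbs Ebs Hq)
    as [NP [NE [Z2 [N1 [N2 [C1 [C2 [FL PA]]]]]]]].
  { intros b0 Hb0. pose proof (Hq b0 Hb0). destruct (Z.leb_spec (snd (shift b0 t0)) (z-1)); auto; lia. }
  { intros b0 Hb0. pose proof (Hq b0 Hb0). unfold rot; cbn [fst snd]. destruct (Z.leb_spec (A - snd (shift b0 t0)) (z-1)); auto; unfold A in *; lia. }
  set (n := length lam) in *.
  set (P := place lam F t0 A) in *.
  assert (QC : forall k, entry n k -> exists b0, In b0 lam /\ ((k = F b0 /\ P k = shift b0 t0) \/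
                           (k = - F b0 /\ P k = rot A (shift b0 t0)))) by (apply place_char with s; auto).
  pose proof HFa as [_ [Hinj [Hcol [HS Hpar]]]].
  assert (EbsF : fst (shift bs t0) = z) by (rewrite Ebs; auto).
  assert (EbsS : snd (shift bs t0) = z) by (rewrite Ebs; auto).
  assert (EbaF : fst (shift ba t0) = z - 1) by (rewrite Eba; auto).
  assert (EbaS : snd (shift ba t0) = z) by (rewrite Eba; auto).
  assert (Fx : forall b0, In b0 lam -> fst (shift b0 t0) = z -> snd (shift b0 t0) = z -> F b0 = F bs).
  { intros b0 Hb0 H1 H2. f_equal. apply (shift_inj _ _ t0). rewrite Ebs. destruct (shift b0 t0). cbn in *. subst; auto. }
  assert (Fy : forall b0, In b0 lam -> fst (shift b0 t0) = z - 1 -> snd (shift b0 t0) = z -> F b0 = F ba).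
  { intros b0 Hb0 H1 H2. f_equal. apply (shift_inj _ _ t0). rewrite Eba. destruct (shift b0 t0). cbn in *. subst; auto. }
  unfold Rsplit; cbv zeta. fold n. fold A. fold P.
  split; [split; [split; [|split]|]|split; [exact Z2|exists (z-1), false; split; [exact N1|split; [exact N2|split; [exact C1|split; [exact C2|split; [exact FL|exact PA]]]]]]].
  - intros k l Hk Hl Hkl Heq. exfalso. eauto.
  - apply place_c2 with s; auto.
  - intros a b c Ha Hc Hab Hbc.
    destruct (inD_place lam s F t0 A a Hn HFa Ha) as [a0 [Ha0 [->| ->]]];
    destruct (inD_place lam s F t0 A c Hn HFa Hc) as [c0 [Hc0 [->| ->]]];
    pose proof (Hq a0 Ha0); pose proof (Hq c0 Hc0).
    + apply (helper_pos lam s F t0 A a0 c0); auto.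
    + exfalso. unfold A, rot in *; cbn [fst snd] in *; lia.
    + destruct (Z_le_dec z (snd b)).
      * apply (helper_pos lam s F t0 A ba c0); auto; unfold A, rot in *; cbn [fst snd] in *; lia.
      * apply (helper_neg lam s F t0 A a0 ba); auto; unfold A, rot in *; cbn [fst snd] in *; lia.
    + apply (helper_neg lam s F t0 A a0 c0); auto.
  - intros k l Hk Hl Hrel. unfold lval, rval. rewrite (NP k Hk), (NP l Hl).
    destruct (QC k Hk) as [b0 [Hb0 [[-> Pk]|[-> Pk]]]]; destruct (QC l Hl) as [b1 [Hb1 [[-> Pl]|[-> Pl]]]];
      rewrite Pk, Pl in *;
      pose proof (Hq b0 Hb0); pose proof (Hq b1 Hb1);
      pose proof (row_le lam F t0 bs b0 HS Hbs Hb0) as f1; pose proof (row_le lam F t0 bs b1 HS Hbs Hb1) as f2;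
      pose proof (row_le lam F t0 ba b0 HS Hba Hb0) as f3; pose proof (row_le lam F t0 ba b1 HS Hba Hb1) as f4;
      pose proof (HS b0 b1 Hb0 Hb1) as f9; pose proof (HS b1 b0 Hb1 Hb0) as f10;
      unfold A in *; crunch; wrap f1; wrap f2; wrap f3; wrap f4; wrap f9; wrap f10;
      destruct Hrel as [[? ?]|[? ?]]; destruct (Z.eq_dec (fst b0 + fst t0) z); finish.
Qed.

Lemma Rm_data lam m s q F : NoDup lam -> 1 <= m -> Rm lam m s q F ->
  HF lam s F /\ exists tq, (forall b0, In b0 lam -> m <= content (shift b0 tq)) /\
                           (exists b0, In b0 lam /\ content (shift b0 tq) = m).
Proof.
  unfold Rm; cbv zeta. intros Hn Hm [[[Hy1 [Hy2 Hsk]] Hst] [[[k [Hk Hkm]] Hmin] [Hfill Hpar]]].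
  set (n := length lam) in *.
  apply fill_gen in Hfill. destruct Hfill as [tq [F1 [F2 F3]]].
  assert (HFa : HF lam s F).
  { split; [|split; [|split; [|split]]].
    - intros b0 Hb0. apply F1; auto.
    - intros b0 b1 Hb0 Hb1 E. apply (shift_inj _ _ tq).
      destruct (F1 b0 Hb0) as [_ [P0 _]]. destruct (F1 b1 Hb1) as [_ [P1 _]]. congruence.
    - intros b0 b1 Hb0 Hb1 E.
      destruct (F1 b0 Hb0) as [E0 [P0 Q0]]. destruct (F1 b1 Hb1) as [E1 [P1 Q1]].
      assert (content (q (F b1)) = - content (q (F b0))).
      { replace (F b1) with (- F b0) by lia. apply Hy2; auto. }
      rewrite P0, P1 in H. lia.
    - apply (Fstd_of lam n q F tq); auto. intros b0 Hb0. destruct (F1 b0 Hb0) as [A1 [A2 _]]. auto.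
    - rewrite <- Hpar. unfold nneg. f_equal. f_equal. apply filter_ext_in. intros x Hx. f_equal.
      unfold posb. destruct (inF lam F x) eqn:E1, (0 <? content (q x)) eqn:E2; auto.
      + apply inF_iff in E1. destruct E1 as [b0 [Hb0 <-]]. destruct (F1 b0 Hb0) as [_ [P0 Q0]].
        rewrite P0 in E2. apply Z.ltb_nlt in E2. lia.
      + apply Z.ltb_lt in E2. destruct (F2 x Hx E2) as [b0 [Hb0 E]].
        assert (inF lam F x = true) by (apply inF_iff; eauto). congruence. }
  split; auto. exists tq. split.
  - intros b0 Hb0. destruct (F1 b0 Hb0) as [E0 [P0 Q0]]. rewrite <- P0. apply Hmin; auto. rewrite P0; lia.
  - destruct (F2 k Hk) as [b0 [Hb0 E]]; [lia|]. exists b0. split; auto.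
    destruct (F1 b0 Hb0) as [_ [P0 _]]. rewrite <- P0, E. auto.
Qed.

Lemma part4 lam m s q F : NoDup lam -> skew (fun b => In b lam) -> 1 <= m -> Rm lam m s q F ->
  exists p, R0 lam s p F.
Proof.
  intros Hn Hsk Hm Hq.
  destruct (Rm_data lam m s q F Hn Hm Hq) as [HFa [tq [Hge [bs [Hbs Ebs0]]]]].
  set (t0 := (fst tq, snd tq - m)).
  assert (Hge0 : forall b0, In b0 lam -> 0 <= content (shift b0 t0)).
  { intros b0 Hb0. specialize (Hge b0 Hb0). unfold t0, content in *; rewrite !shift_eq in *; cbn [fst snd] in *. lia. }
  set (z := fst (shift bs t0)).
  assert (Ebs : shift bs t0 = (z, z)).
  { unfold z. unfold t0, content in *; rewrite !shift_eq in *; cbn [fst snd] in *. f_equal. lia. }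
  assert (EbsF : fst (shift bs t0) = z) by (rewrite Ebs; auto).
  assert (EbsS : snd (shift bs t0) = z) by (rewrite Ebs; auto).
  assert (Hq0 : forall b0, In b0 lam -> fst (shift b0 t0) <= z <= snd (shift b0 t0)).
  { intros b0 Hb0. pose proof (Hge0 b0 Hb0). split.
    - apply Z.nlt_ge. intros HH.
      assert (In (fst b0, snd bs) lam).
      { apply (Hsk bs _ b0); auto; unfold content in *; rewrite !shift_eq in *; cbn [fst snd] in *; lia. }
      pose proof (Hge0 _ H0). unfold content in *; rewrite !shift_eq in *; cbn [fst snd] in *; lia.
    - apply Z.nlt_ge. intros HH.
      assert (In (fst bs, snd b0) lam).
      { apply (Hsk b0 _ bs); auto; unfold content in *; rewrite !shift_eq in *; cbn [fst snd] in *; lia. }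
      pose proof (Hge0 _ H0). unfold content in *; rewrite !shift_eq in *; cbn [fst snd] in *; lia. }
  pose proof HFa as [_ [Hinj [Hcol [HS _]]]].
  set (x := F bs).
  destruct (classic (exists b0, In b0 lam /\ fst (shift b0 t0) = z /\ snd (shift b0 t0) <> z /\ F b0 <= Z.abs x))
    as [[b0 [Hb0 [H1 [H2 H3]]]]|N1].
  {
    set (br := (fst bs, snd bs + 1)).
    pose proof (Hq0 b0 Hb0).
    assert (Hbr : In br lam).
    { apply (Hsk bs _ b0); auto; unfold br; rewrite !shift_eq in *; cbn [fst snd] in *; lia. }
    assert (Ebr : shift br t0 = (z, z+1)).
    { unfold br. rewrite !shift_eq in *. cbn [fst snd] in *. f_equal; lia. }
    assert (F br <= F b0).
    { apply (row_le lam F t0); auto; rewrite Ebr; cbn [fst snd]; lia. }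
    assert (x < F br).
    { apply HS; auto. unfold rel, br. cbn [fst snd]. lia. }
    assert (F br <> - x).
    { intros E. apply (Hcol br bs); auto. }
    exists (place lam F t0 (2*z+1)). right; left. apply (build_div lam s F t0 bs br z); auto.
    fold x. lia. }
  destruct (classic (exists b0, In b0 lam /\ snd (shift b0 t0) = z /\ fst (shift b0 t0) <> z /\ - Z.abs x <= F b0))
    as [[b0 [Hb0 [H1 [H2 H3]]]]|N2].
  {
    set (ba := (fst bs - 1, snd bs)).
    pose proof (Hq0 b0 Hb0).
    assert (Hba : In ba lam).
    { apply (Hsk b0 _ bs); auto; unfold ba; rewrite !shift_eq in *; cbn [fst snd] in *; lia. }
    assert (Eba : shift ba t0 = (z-1, z)).
    { unfold ba. rewrite !shift_eq in *. cbn [fst snd] in *. f_equal; lia. }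
    assert (F b0 <= F ba).
    { apply (col_le lam F t0); auto; rewrite Eba; cbn [fst snd]; lia. }
    assert (F ba < x).
    { apply HS; auto. unfold rel, ba. cbn [fst snd]. lia. }
    assert (F ba <> - x).
    { intros E. apply (Hcol ba bs); auto. }
    exists (place lam F t0 (2*z-1)). right; right. apply (build_vert lam s F t0 bs ba z); auto.
    fold x. lia. }
  exists (place lam F t0 (2*z)). left. apply (build_box lam s F t0 bs z); auto.
  - intros b0 Hb0 H1 H2. apply Z.nle_gt. intros H3. apply N1. exists b0. auto.
  - intros b0 Hb0 H1 H2. apply Z.nle_gt. intros H3. apply N2. exists b0. repeat split; auto; lia.
Qed.

Theorem theorem4p9 (lam : list box) (m : Z) :
  NoDup lam -> skew (fun b => In b lam) -> 1 <= m ->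
  forall s : bool,
    (forall p F F', R0 lam s p F -> R0 lam s p F' ->
       forall b, In b lam -> F b = F' b) /\
    (forall p F, R0 lam s p F -> exists q, Rm lam m s q F) /\
    (forall p p' F, R0 lam s p F -> R0 lam s p' F ->
       same_tableau (length lam) p p') /\
    (forall q F, Rm lam m s q F -> exists p, R0 lam s p F).
Proof.
  intros Hn Hsk Hm s. split; [|split; [|split]].
  - intros p F F' R1 R2 b Hb. apply (part1 lam s p F F'); auto.
  - intros p F R. apply (part2 lam s p F m); auto.
  - intros p p' F R1 R2. apply (part3 lam s p p' F); auto.
  - intros q F Rq. apply (part4 lam m s q F); auto.
Qed.
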